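(* Under the assumptions (A1), (A2), (A3) below, with the notation of the context: (1) for every $\varphi\in C([-q,0],\mathbb R)$ and every $t>0$, $|x(\varphi)(t)-z_h(\varphi)([t]_h)|\to0$ as $h\to0$ (along $h=q/k$, $k\to\infty$); (2) for all sufficiently small $h=q/k$, the zero solution of the difference equation with variable delay $$\zeta_h(n+1)=\zeta_h(n)-\Big(\int_{nh}^{(n+1)h}a(s)\,ds\Big)\zeta_h(n-k_n),\quad n\ge0,\qquad \zeta_h(n)=\varphi(nh),\ n=-k,\dots,0,$$ is uniformly asymptotically stable. Assumptions: $q>0$, $a:[0,\infty)\to[0,\infty)$ continuous, $r:[0,\infty)\to[0,q]$ with $q=\sup_{t\ge0}r(t)$; (A1) the zero solution of $x'(t)=-a(t)x(t-r(t))$ is uniformly asymptotically stable; (A2) $\sup_{t\ge0}|a(t)|<\infty$; (A3) $r$ is uniformly continuous on $[0,\infty)$.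
   Context: $x(\varphi)$ is the solution of $x'(t)=-a(t)x(t-r(t))$, $t\ge0$, with $x=\varphi$ on $[-q,0]$. For $h=q/k$ ($k\ge1$ integer), $[s]_h=\lfloor s/h\rfloor h$, $k_n:=\lfloor r(nh)/h\rfloor\in\{0,\dots,k\}$, and $z_h(\varphi)$ is the continuous function on $[0,\infty)$ (with $z_h(nh)=\varphi(nh)$ for $n=-k,\dots,0$) satisfying $z_h'(t)=-a(t)z_h((i-k_i)h)$ on each $[ih,(i+1)h)$, $i\ge0$; the sequence $\zeta_h(n)=z_h(nh)$ is the solution of the displayed difference equation. The zero solution of the difference equation is uniformly asymptotically stable if it is uniformly stable (for every $\varepsilon>0$ there is $\delta>0$ such that initial data of sup-norm $<\delta$ at any initial time give solutions bounded by $\varepsilon$ afterwards) and uniformly attractive (solutions with small initial data tend to $0$ as $n\to\infty$ uniformly with respect to the initial time). *)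

(* Defs.v *)
From Stdlib Require Import Reals Lra ZArith ClassicalEpsilon.
Open Scope R_scope.

Definition cont_on (I : R -> Prop) (f : R -> R) : Prop :=
  forall t, I t -> forall eps, 0 < eps ->
    exists del, 0 < del /\ forall s, I s -> Rabs (s - t) < del ->
      Rabs (f s - f t) < eps.

(* Riemann integral of f over [u,v] (0 if f is not Riemann integrable there;
   the value does not depend on the integrability proof, by RiemannInt_P5). *)
Definition Rint (f : R -> R) (u v : R) : R :=
  match excluded_middle_informative
          (exists _ : Riemann_integrable f u v, True) with
  | left H => RiemannInt (proj1_sig (constructive_indefinite_description _ H))
  | right _ => 0
  end.

Definition dde_sol (a r : R -> R) (q sigma : R) (x : R -> R) : Prop :=
  cont_on (fun t => sigma - q <= t) x /\
  forall t, sigma < t -> derivable_pt_lim x t (- a t * x (t - r t)).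

Definition dde_UAS (a r : R -> R) (q : R) : Prop :=
  (forall eps, 0 < eps -> exists del, 0 < del /\
     forall sigma x, 0 <= sigma -> dde_sol a r q sigma x ->
       (forall s, sigma - q <= s <= sigma -> Rabs (x s) < del) ->
       forall t, sigma <= t -> Rabs (x t) < eps) /\
  (exists del0, 0 < del0 /\ forall eta, 0 < eta -> exists T, 0 <= T /\
     forall sigma x, 0 <= sigma -> dde_sol a r q sigma x ->
       (forall s, sigma - q <= s <= sigma -> Rabs (x s) < del0) ->
       forall t, sigma + T <= t -> Rabs (x t) < eta).

(* [s]_h / h = floor(s/h) ; Int_part is the floor function. *)
Definition kn (r : R -> R) (h : R) (n : Z) : Z := Int_part (r (IZR n * h) / h).

Definition coef (a : R -> R) (h : R) (n : Z) : R :=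
  Rint a (IZR n * h) ((IZR n + 1) * h).

Definition diff_sol (a r : R -> R) (h : R) (n0 : Z) (zeta : Z -> R) : Prop :=
  forall n : Z, (n0 <= n)%Z ->
    zeta (n + 1)%Z = zeta n - coef a h n * zeta (n - kn r h n)%Z.

Definition diff_UAS (a r : R -> R) (q : R) (k : nat) : Prop :=
  let h := q / INR k in
  let K := Z.of_nat k in
  (forall eps, 0 < eps -> exists del, 0 < del /\
     forall n0 zeta, (0 <= n0)%Z -> diff_sol a r h n0 zeta ->
       (forall m, (n0 - K <= m <= n0)%Z -> Rabs (zeta m) < del) ->
       forall n, (n0 <= n)%Z -> Rabs (zeta n) < eps) /\
  (exists del0, 0 < del0 /\ forall eta, 0 < eta -> exists N : Z, (0 <= N)%Z /\
     forall n0 zeta, (0 <= n0)%Z -> diff_sol a r h n0 zeta ->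
       (forall m, (n0 - K <= m <= n0)%Z -> Rabs (zeta m) < del0) ->
       forall n, (n0 + N <= n)%Z -> Rabs (zeta n) < eta).

(* Main.v *)
Require Import Defs.
From Stdlib Require Import Reals ZArith Lra Lia ClassicalEpsilon.
From Coquelicot Require Import Coquelicot.
Open Scope R_scope.


Lemma mono_open (H dH : R -> R) (u v : R) :
  u <= v ->
  (forall c, u < c < v -> derivable_pt_lim H c (dH c) /\ 0 <= dH c) ->
  (forall c, u <= c <= v -> continuity_pt H c) ->
  H u <= H v.
Proof.
  intros huv Hd Hc.
  destruct (Req_dec u v) as [e|ne]; [subst; lra|].
  assert (pr1 : forall c, u < c < v -> derivable_pt H c).
  { intros c hc. exists (dH c). exact (proj1 (Hd c hc)). }
  assert (pr2 : forall c, u < c < v -> derivable_pt id c).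
  { intros c _. apply derivable_pt_id. }
  destruct (MVT H id u v pr1 pr2) as [c [P E]]; [lra|exact Hc|intros; apply derivable_continuous_pt, derivable_pt_id|].
  rewrite (derive_pt_eq_0 H c (dH c) (pr1 c P) (proj1 (Hd c P))) in E.
  rewrite (derive_pt_eq_0 id c 1 (pr2 c P) (derivable_pt_lim_id c)) in E.
  unfold id in E.
  pose proof (proj2 (Hd c P)).
  assert (0 <= (v - u) * dH c) by (apply Rmult_le_pos; lra).
  nra.
Qed.

Lemma weighted (F G dF dG : R -> R) (u v : R) :
  u <= v ->
  (forall c, u < c < v -> derivable_pt_lim F c (dF c) /\ derivable_pt_lim G c (dG c)
     /\ Rabs (dF c) <= dG c) ->
  (forall c, u <= c <= v -> continuity_pt F c /\ continuity_pt G c) ->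
  Rabs (F v - F u) <= G v - G u.
Proof.
  intros huv Hd Hc.
  assert (h1 : (fun t => G t - F t) u <= (fun t => G t - F t) v).
  { apply (mono_open (fun t => G t - F t) (fun t => dG t - dF t)); auto.
    - intros c hc; destruct (Hd c hc) as [d1 [d2 d3]]; split.
      + apply derivable_pt_lim_minus; auto.
      + pose proof (Rle_abs (dF c)); lra.
    - intros c hc; destruct (Hc c hc); apply continuity_pt_minus; auto. }
  assert (h2 : (fun t => G t + F t) u <= (fun t => G t + F t) v).
  { apply (mono_open (fun t => G t + F t) (fun t => dG t + dF t)); auto.
    - intros c hc; destruct (Hd c hc) as [d1 [d2 d3]]; split.
      + apply derivable_pt_lim_plus; auto.
      + pose proof (Rle_abs (- dF c)); rewrite Rabs_Ropp in H; lra.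
    - intros c hc; destruct (Hc c hc); apply continuity_pt_plus; auto. }
  simpl in *. apply Rabs_le; lra.
Qed.

Lemma cont_eps (f : R -> R) (x : R) :
  (forall eps, 0 < eps -> exists del, 0 < del /\ forall y, Rabs (y - x) < del -> Rabs (f y - f x) < eps) ->
  continuity_pt f x.
Proof.
  intros H eps heps. destruct (H eps heps) as [d [hd Hd]].
  exists d; split; auto. intros y [_ hy]. apply Hd. exact hy.
Qed.

Lemma cont_pt_eps (f : R -> R) (x : R) : continuity_pt f x ->
  forall eps, 0 < eps -> exists del, 0 < del /\ forall y, Rabs (y - x) < del -> Rabs (f y - f x) < eps.
Proof.
  intros H eps heps. destruct (H eps heps) as [d [hd Hd]].
  exists d; split; auto. intros y hy.
  destruct (Req_dec y x) as [->|ne]. rewrite Rminus_diag, Rabs_R0; auto.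
  apply (Hd y); split; [split; [exact I| congruence] | exact hy].
Qed.

Lemma Rmax_lip (c x y : R) : Rabs (Rmax c y - Rmax c x) <= Rabs (y - x).
Proof. unfold Rmax; destruct (Rle_dec c y), (Rle_dec c x); apply Rabs_le; split;
  try (apply Rabs_le_between; lra);
  pose proof (Rle_abs (y - x)); pose proof (Rle_abs (-(y - x))); rewrite Rabs_Ropp in *; lra.
Qed.

Lemma Rmin_lip (c x y : R) : Rabs (Rmin c y - Rmin c x) <= Rabs (y - x).
Proof. unfold Rmin; destruct (Rle_dec c y), (Rle_dec c x);
  pose proof (Rle_abs (y - x)); pose proof (Rle_abs (-(y - x))); rewrite Rabs_Ropp in *;
  apply Rabs_le; lra.
Qed.

Lemma cont_ext_max (c : R) (f : R -> R) : cont_on (fun t => c <= t) f ->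
  forall t, continuity_pt (fun s => f (Rmax c s)) t.
Proof.
  intros Hf t. apply cont_eps. intros eps heps.
  destruct (Hf (Rmax c t) (Rmax_l c t) eps heps) as [d [hd Hd]].
  exists d; split; auto. intros y hy. apply Hd. apply Rmax_l.
  eapply Rle_lt_trans; [apply Rmax_lip|exact hy].
Qed.

Lemma cont_ext_clamp (c d : R) (f : R -> R) : c <= d -> cont_on (fun t => c <= t <= d) f ->
  forall t, continuity_pt (fun s => f (Rmin d (Rmax c s))) t.
Proof.
  intros cd Hf t. apply cont_eps. intros eps heps.
  assert (HI : forall s, c <= Rmin d (Rmax c s) <= d).
  { intros s; unfold Rmin, Rmax; destruct (Rle_dec c s), (Rle_dec d _); lra. }
  destruct (Hf _ (HI t) eps heps) as [e [he He]].
  exists e; split; auto. intros y hy. apply He. apply HI.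
  eapply Rle_lt_trans; [apply Rmin_lip|]. eapply Rle_lt_trans; [apply Rmax_lip|exact hy].
Qed.

Lemma cont_interior (c : R) (f : R -> R) : cont_on (fun t => c <= t) f ->
  forall t, c < t -> continuity_pt f t.
Proof.
  intros Hf t ht. apply cont_eps. intros eps heps.
  destruct (Hf t (Rlt_le _ _ ht) eps heps) as [d [hd Hd]].
  exists (Rmin d (t - c)); split. apply Rmin_pos; lra.
  intros y hy. apply Hd.
  - pose proof (Rmin_r d (t - c)). apply Rabs_lt_between in hy. lra.
  - pose proof (Rmin_l d (t - c)). lra.
Qed.

Lemma deriv_RInt (f : R -> R) (c : R) : (forall t, continuity_pt f t) ->
  forall t, derivable_pt_lim (fun x => RInt f c x) t (f t).
Proof.
  intros Hf t. apply is_derive_Reals.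
  apply is_derive_RInt with (a := c).
  - apply filter_forall. intros b. apply (RInt_correct (V:=R_CompleteNormedModule)). apply (ex_RInt_continuous (V:=R_CompleteNormedModule)).
    intros z _. apply continuity_pt_filterlim, Hf.
  - apply continuity_pt_filterlim, Hf.
Qed.


Lemma exRInt (g : R -> R) (u v : R) : (forall t, continuity_pt g t) -> ex_RInt g u v.
Proof. intros H. apply (ex_RInt_continuous (V:=R_CompleteNormedModule)).
  intros z _. apply continuity_pt_filterlim, H. Qed.

Lemma Rint_RInt (f g : R -> R) (u v : R) : u <= v ->
  (forall t, u <= t <= v -> f t = g t) -> (forall t, continuity_pt g t) ->
  Rint f u v = RInt g u v.
Proof.
  intros huv Hfg Hg. unfold Rint.
  destruct excluded_middle_informative as [e|ne].
  - destruct (constructive_indefinite_description _ e) as [pr HH]; simpl.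
    rewrite <- RInt_Reals. apply RInt_ext. intros x hx.
    rewrite Rmin_left, Rmax_right in hx by lra. apply Hfg; lra.
  - exfalso. apply ne. refine (ex_intro _ _ I).
    apply Riemann_integrable_ext with g.
    + intros x hx. rewrite Rmin_left, Rmax_right in hx by lra. symmetry; apply Hfg; lra.
    + apply ex_RInt_Reals_0, exRInt, Hg.
Qed.

Lemma Int_part_range (x : R) (K : Z) : 0 <= x <= IZR K ->
  (0 <= Int_part x <= K)%Z /\ IZR (Int_part x) <= x < IZR (Int_part x) + 1.
Proof.
  intros hx. destruct (base_Int_part x) as [h1 h2].
  split; [split|split]; try lra.
  - assert (IZR (-1) < IZR (Int_part x)) by (simpl; lra).
    apply lt_IZR in H. lia.
  - apply le_IZR. lra.
Qed.

Lemma kn_props (r : R -> R) (q h : R) (k : nat) (n : Z) : 0 < h -> q = INR k * h ->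
  0 <= r (IZR n * h) <= q ->
  (0 <= kn r h n <= Z.of_nat k)%Z /\
  IZR (kn r h n) * h <= r (IZR n * h) < IZR (kn r h n) * h + h.
Proof.
  intros hh hq hr. unfold kn.
  assert (0 <= r (IZR n * h) / h <= IZR (Z.of_nat k)).
  { rewrite <- INR_IZR_INZ. split.
    - apply Rmult_le_pos; [lra| left; apply Rinv_0_lt_compat; lra].
    - apply Rmult_le_reg_r with h; auto. unfold Rdiv. rewrite Rmult_assoc, Rinv_l by lra. lra. }
  destruct (Int_part_range _ _ H) as [h1 [h2 h3]]. split; auto.
  unfold Rdiv in h2, h3. split.
  - apply Rmult_le_reg_r with (/h). apply Rinv_0_lt_compat; lra.
    rewrite Rmult_assoc, Rinv_r by lra. lra.
  - apply Rmult_lt_reg_r with (/h). apply Rinv_0_lt_compat; lra.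
    rewrite Rmult_plus_distr_r, Rmult_assoc, Rinv_r by lra. lra.
Qed.

Lemma one_step (a ae r y : R -> R) (M w h c : R) (n : Z) :
  0 < h -> 0 <= IZR n * h ->
  (forall t, continuity_pt ae t) -> (forall t, 0 <= t -> ae t = a t) ->
  (forall t, 0 <= t -> Rabs (a t) <= M) ->
  (forall t, IZR n * h <= t <= (IZR n + 1) * h -> continuity_pt y t) ->
  (forall t, IZR n * h < t < (IZR n + 1) * h -> derivable_pt_lim y t (- a t * y (t - r t))) ->
  (forall s, IZR n * h < s < (IZR n + 1) * h -> Rabs (c - y (s - r s)) <= w) ->
  Rabs (y ((IZR n + 1) * h) - y (IZR n * h) + coef a h n * c) <= M * w * h.
Proof.
  intros hh hn Hae Haea HM Hyc Hyd Hmod.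
  set (u := IZR n * h). set (v := (IZR n + 1) * h).
  assert (uv : u <= v) by (unfold u, v; nra).
  assert (HF := weighted (fun t => y t + RInt ae u t * c) (fun t => M * w * t)
            (fun t => - a t * y (t - r t) + ae t * c) (fun t => M * w) u v uv).
  simpl in HF.
  rewrite RInt_point in HF.
  assert (coef a h n = RInt ae u v) as Hc.
  { unfold coef. apply Rint_RInt; auto. intros t ht. symmetry; apply Haea. unfold u in *; lra. }
  rewrite Hc.
  replace (y v - y u + RInt ae u v * c) with (y v + RInt ae u v * c - (y u + zero * c)).
  2: { unfold zero; simpl; ring. }
  replace (M * w * h) with (M * w * v - M * w * u) by (unfold u, v; ring).
  apply HF.
  - intros t ht. split; [|split].
    + apply derivable_pt_lim_plus. apply Hyd; exact ht.
      apply (derivable_pt_lim_scal_right (fun x => RInt ae u x) t (ae t) c). apply deriv_RInt; auto.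
    + pose proof (derivable_pt_lim_scal (fun x => x) (M*w) t 1 (derivable_pt_lim_id t)) as HH.
      unfold mult_real_fct in HH. rewrite Rmult_1_r in HH. exact HH.
    + rewrite Haea by (unfold u in *; lra).
      replace (- a t * y (t - r t) + a t * c) with (a t * (c - y (t - r t))) by ring.
      rewrite Rabs_mult. apply Rmult_le_compat; try apply Rabs_pos.
      apply HM; unfold u in *; lra. apply Hmod; exact ht.
  - intros t ht. split.
    + apply continuity_pt_plus. apply Hyc; exact ht.
      apply continuity_pt_mult. apply derivable_continuous_pt. exists (ae t). apply deriv_RInt; auto.
      apply continuity_pt_const; intros ? ?; reflexivity.
    + apply continuity_pt_mult. apply continuity_pt_const; intros ? ?; reflexivity.
      apply derivable_continuous_pt, derivable_pt_id.
Qed.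

Lemma coef_bound (a ae : R -> R) (M h : R) (n : Z) : 0 < h -> 0 <= IZR n * h ->
  (forall t, continuity_pt ae t) -> (forall t, 0 <= t -> ae t = a t) ->
  (forall t, 0 <= t -> Rabs (a t) <= M) -> Rabs (coef a h n) <= M * h.
Proof.
  intros hh hn Hae Haea HM. unfold coef.
  rewrite (Rint_RInt a ae); [| nra | intros; symmetry; apply Haea; nra | exact Hae].
  replace (M * h) with (((IZR n + 1) * h - IZR n * h) * M) by ring.
  apply abs_RInt_le_const. nra. apply exRInt; auto.
  intros t ht. rewrite Haea by lra. apply HM; lra.
Qed.

Lemma Rabs_3 (x y z : R) : Rabs (x + y - z) <= Rabs x + Rabs y + Rabs z.
Proof. unfold Rminus. eapply Rle_trans. apply Rabs_triang. rewrite Rabs_Ropp.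
  pose proof (Rabs_triang x y). lra. Qed.

Lemma compare (a ae r y : R -> R) (zeta : Z -> R) (q h M w e0 : R) (k : nat) (n1 : Z) :
  0 < h -> q = INR k * h -> (0 <= n1)%Z -> 0 <= M -> 0 <= w -> 0 <= e0 ->
  (forall t, continuity_pt ae t) -> (forall t, 0 <= t -> ae t = a t) ->
  (forall t, 0 <= t -> Rabs (a t) <= M) ->
  (forall t, 0 <= t -> 0 <= r t <= q) ->
  (forall t, IZR n1 * h <= t -> continuity_pt y t) ->
  (forall t, IZR n1 * h < t -> derivable_pt_lim y t (- a t * y (t - r t))) ->
  diff_sol a r h n1 zeta ->
  (forall m, (n1 - Z.of_nat k <= m <= n1)%Z -> Rabs (y (IZR m * h) - zeta m) <= e0) ->
  forall J : nat,
  (forall n, (n1 <= n < n1 + Z.of_nat J)%Z -> forall s, IZR n * h < s < (IZR n + 1) * h ->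
      Rabs (y (IZR (n - kn r h n) * h) - y (s - r s)) <= w) ->
  forall j : nat, (j <= J)%nat -> forall m, (n1 - Z.of_nat k <= m <= n1 + Z.of_nat j)%Z ->
    Rabs (y (IZR m * h) - zeta m) <= (e0 + w) * (1 + M * h) ^ j - w.
Proof.
  intros hh hq hn1 hM hw he0 Hae Haea HM Hr Hyc Hyd Hz Hwin J Hmod.
  assert (hn1r : 0 <= IZR n1) by (apply IZR_le; lia).
  induction j as [|j IH].
  - intros _ m hm. simpl. rewrite Rmult_1_r. replace (e0 + w - w) with e0 by ring.
    apply Hwin. lia.
  - intros hjJ m hm. specialize (IH ltac:(lia)).
    assert (hp : 1 <= (1 + M * h) ^ j) by (apply pow_R1_Rle; nra).
    destruct (Z.eq_dec m (n1 + Z.of_nat (S j))) as [em|nem].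
    2: { rewrite Nat2Z.inj_succ in hm, nem. eapply Rle_trans. apply IH. lia. simpl.
         assert (0 <= (e0 + w) * (M * h) * (1 + M * h) ^ j).
         { apply Rmult_le_pos; [apply Rmult_le_pos|]; nra. }
         nra. }
    set (n := (n1 + Z.of_nat j)%Z).
    assert (hnn : (n1 <= n)%Z) by (unfold n; lia).
    assert (hmn : m = (n + 1)%Z) by (unfold n; rewrite em, Nat2Z.inj_succ; lia).
    assert (hnr : IZR n1 * h <= IZR n * h) by (apply Rmult_le_compat_r; [lra|apply IZR_le; lia]).
    assert (hn0 : 0 <= IZR n * h) by nra.
    destruct (kn_props r q h k n hh hq (Hr _ hn0)) as [[hk1 hk2] _].
    set (c := IZR (n - kn r h n) * h).
    assert (hstep := one_step a ae r y M w h (y c) n hh hn0 Hae Haea HM).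
    assert (R1 : Rabs (y ((IZR n + 1) * h) - y (IZR n * h) + coef a h n * y c) <= M * w * h).
    { apply hstep.
      - intros t ht. apply Hyc. lra.
      - intros t ht. apply Hyd. lra.
      - intros s hs. apply Hmod; auto. unfold n; lia. }
    assert (E1 : Rabs (y (IZR n * h) - zeta n) <= (e0 + w) * (1 + M * h) ^ j - w) by (apply IH; lia).
    assert (E2 : Rabs (y c - zeta (n - kn r h n)%Z) <= (e0 + w) * (1 + M * h) ^ j - w) by (apply IH; lia).
    assert (Cb := coef_bound a ae M h n hh hn0 Hae Haea HM).
    rewrite hmn, (Hz n hnn), plus_IZR.
    replace (y ((IZR n + IZR 1) * h) - (zeta n - coef a h n * zeta (n - kn r h n)%Z)) with
      ((y ((IZR n + 1) * h) - y (IZR n * h) + coef a h n * y c) + (y (IZR n * h) - zeta n)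
        - coef a h n * (y c - zeta (n - kn r h n)%Z)) by (simpl; ring).
    assert (Rabs (coef a h n * (y c - zeta (n - kn r h n)%Z)) <= M * h * ((e0 + w) * (1 + M * h) ^ j - w)).
    { rewrite Rabs_mult. apply Rmult_le_compat; auto; apply Rabs_pos. }
    eapply Rle_trans. apply Rabs_3.
    simpl. set (X := (1 + M * h) ^ j) in *. nra.
Qed.


Lemma pow_exp (x : R) (n : nat) : 0 <= x -> (1 + x) ^ n <= exp (INR n * x).
Proof.
  intros hx. induction n as [|n IH].
  - simpl. rewrite Rmult_0_l, exp_0. lra.
  - rewrite S_INR. replace ((INR n + 1) * x) with (x + INR n * x) by ring.
    rewrite exp_plus. simpl.
    assert (1 + x <= exp x).
    { destruct (Req_dec x 0) as [->|ne]. rewrite exp_0; lra. left; apply exp_ineq1; auto. }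
    apply Rmult_le_compat; auto; try lra. apply pow_le; lra.
Qed.

Lemma small_h (q hmax : R) : 0 < q -> 0 < hmax ->
  exists K : nat, forall k : nat, (K <= k)%nat -> (1 <= k)%nat -> q / INR k < hmax.
Proof.
  intros hq hm. destruct (archimed_cor1 (hmax / q)) as [N [hN hN0]].
  { apply Rdiv_lt_0_compat; auto. }
  exists N. intros k hk _.
  assert (0 < INR N) by (apply lt_0_INR; lia).
  assert (INR N <= INR k) by (apply le_INR; lia).
  assert (/ INR k <= / INR N) by (apply Rinv_le_contravar; lra).
  unfold Rdiv. apply Rmult_lt_reg_r with (/ q). apply Rinv_0_lt_compat; lra.
  rewrite Rmult_comm, <- Rmult_assoc, Rinv_l, Rmult_1_l by lra.
  unfold Rdiv in hN. lra.
Qed.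

Lemma unif (f : R -> R) (c d : R) : cont_on (fun t => c <= t) f ->
  forall eps, 0 < eps -> exists del, 0 < del /\ forall u v, c <= u <= d -> c <= v <= d ->
    Rabs (u - v) < del -> Rabs (f u - f v) < eps.
Proof.
  intros Hf eps heps.
  destruct (Heine (fun s => f (Rmax c s)) (fun s => c <= s <= d) (compact_P3 c d)
     (fun s _ => cont_ext_max c f Hf s) (mkposreal eps heps)) as [[del hdel] Hd].
  exists del; split; auto. intros u v hu hv huv.
  specialize (Hd u v hu hv huv). simpl in Hd.
  rewrite !Rmax_right in Hd by lra. exact Hd.
Qed.

Lemma hpos (q : R) (k : nat) : 0 < q -> (1 <= k)%nat -> 0 < q / INR k /\ q = INR k * (q / INR k).
Proof.
  intros hq hk. assert (0 < INR k) by (apply lt_0_INR; lia). split.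
  - apply Rdiv_lt_0_compat; auto.
  - field. lra.
Qed.

Lemma part1 (q : R) (a r : R -> R) (M : R)
  (hq : 0 < q)
  (ha_cont : cont_on (fun t => 0 <= t) a)
  (hr_range : forall t, 0 <= t -> 0 <= r t <= q)
  (hM : forall t, 0 <= t -> Rabs (a t) <= M)
  (A3 : forall eps, 0 < eps -> exists del, 0 < del /\
          forall s t, 0 <= s -> 0 <= t -> Rabs (s - t) < del ->
            Rabs (r s - r t) < eps) :
  (forall (phi : R -> R), cont_on (fun s => -q <= s <= 0) phi ->
   forall t, 0 < t ->
   forall x, dde_sol a r q 0 x -> (forall s, -q <= s <= 0 -> x s = phi s) ->
   forall eps, 0 < eps -> exists K : nat, forall k : nat, (K <= k)%nat -> (1 <= k)%nat ->
     forall zeta, diff_sol a r (q / INR k) 0 zeta ->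
       (forall m, (- Z.of_nat k <= m <= 0)%Z -> zeta m = phi (IZR m * (q / INR k))) ->
       Rabs (x t - zeta (Int_part (t / (q / INR k)))) < eps).
Proof.
  intros phi Hphi t ht x [Hxc Hxd] Hxphi eps heps.
  assert (hM0 : 0 <= M) by (pose proof (hM 0 (Rle_refl 0)); pose proof (Rabs_pos (a 0)); lra).
  set (ae := fun s => a (Rmax 0 s)).
  assert (Hae : forall s, continuity_pt ae s) by (apply cont_ext_max; exact ha_cont).
  assert (Haea : forall s, 0 <= s -> ae s = a s) by (intros s hs; unfold ae; rewrite Rmax_right; auto).
  replace (0 - q) with (- q) in Hxc by ring.
  assert (hexp : 0 < exp (M * t)) by apply exp_pos.
  set (w := eps / (2 * exp (M * t))).
  assert (hw : 0 < w) by (unfold w; apply Rdiv_lt_0_compat; lra).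
  destruct (unif x (-q) t Hxc (Rmin (eps/2) w)) as [del [hdel Hdel]].
  { apply Rmin_pos; lra. }
  destruct (A3 (del/2)) as [dr [hdr Hdr]]; [lra|].
  destruct (small_h q (Rmin (del/4) dr)) as [K HK]; auto. { apply Rmin_pos; lra. }
  exists K. intros k hk hk1 zeta Hz Hzphi.
  specialize (HK k hk hk1).
  destruct (hpos q k hq hk1) as [hh hqk].
  set (h := q / INR k) in *.
  assert (h1 : h < del / 4) by (pose proof (Rmin_l (del/4) dr); lra).
  assert (h2 : h < dr) by (pose proof (Rmin_r (del/4) dr); lra).
  set (N := Int_part (t / h)).
  destruct (base_Int_part (t / h)) as [b1 b2]. fold N in b1, b2.
  assert (hN1 : IZR N * h <= t).
  { apply Rmult_le_compat_r with (r := h) in b1; [|lra]. unfold Rdiv in b1.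
    rewrite Rmult_assoc, Rinv_l, Rmult_1_r in b1 by lra. exact b1. }
  assert (hN2 : t < IZR N * h + h).
  { assert (t / h < IZR N + 1) by lra.
    apply Rmult_lt_compat_r with (r := h) in H; [|lra]. unfold Rdiv in H.
    rewrite Rmult_assoc, Rinv_l, Rmult_1_r in H by lra. lra. }
  assert (hN0 : (0 <= N)%Z).
  { assert (IZR (-1) < IZR N).
    { simpl. assert (0 < t / h) by (apply Rdiv_lt_0_compat; lra). lra. }
    apply lt_IZR in H. lia. }
  assert (HC := compare a ae r x zeta q h M w 0 k 0 hh hqk (Z.le_refl 0) hM0 (Rlt_le _ _ hw) (Rle_refl 0)
           Hae Haea hM hr_range).
  assert (E : Rabs (x (IZR N * h) - zeta N) <= (0 + w) * (1 + M * h) ^ (Z.to_nat N) - w).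
  { refine (HC _ _ Hz _ (Z.to_nat N) _ (Z.to_nat N) (le_n _) N _).
    - intros s hs. apply (cont_interior (-q)); auto. lra.
    - intros s hs. apply Hxd. lra.
    - intros m hm. rewrite Hzphi by lia. rewrite Hxphi. rewrite Rminus_diag, Rabs_R0; lra.
      split.
      + assert (IZR (- Z.of_nat k) <= IZR m) by (apply IZR_le; lia).
        rewrite opp_IZR, <- INR_IZR_INZ in H. rewrite hqk at 1. nra.
      + assert (IZR m <= IZR 0) by (apply IZR_le; lia). simpl in H. nra.
    - intros n hn s hs.
      assert (hnr : 0 <= IZR n) by (apply IZR_le; lia).
      assert (hnN : IZR n + 1 <= IZR N) by (rewrite <- plus_IZR; apply IZR_le; lia).
      assert (hn0 : 0 <= IZR n * h) by nra.
      destruct (kn_props r q h k n hh hqk (hr_range _ hn0)) as [[hk1' hk2'] [hk3 hk4]].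
      assert (hkr : IZR (kn r h n) <= INR k) by (rewrite INR_IZR_INZ; apply IZR_le; lia).
      assert (hs0 : 0 <= s) by nra.
      pose proof (hr_range s hs0).
      assert (Hrr : Rabs (r s - r (IZR n * h)) < del / 2).
      { apply Hdr; auto. apply Rabs_lt_between. nra. }
      apply Rabs_lt_between in Hrr.
      assert (hk0 : 0 <= IZR (kn r h n)) by (apply IZR_le; lia).
      assert (IZR (kn r h n) * h <= INR k * h) by (apply Rmult_le_compat_r; lra).
      assert (IZR n * h + h <= IZR N * h) by nra.
      assert (0 <= IZR (kn r h n) * h) by nra.
      rewrite minus_IZR. left. eapply Rlt_le_trans; [apply Hdel|apply Rmin_r].
      + split; nra.
      + split; nra.
      + apply Rabs_lt_between. nra.
    - rewrite Z2Nat.id; lia. }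
  assert (Hp := pow_exp (M * h) (Z.to_nat N) ltac:(nra)).
  rewrite INR_IZR_INZ, Z2Nat.id in Hp by auto.
  assert (exp (IZR N * (M * h)) <= exp (M * t)).
  { destruct (Req_dec (IZR N * (M * h)) (M * t)) as [e|ne]; [rewrite e; lra|].
    left; apply exp_increasing. nra. }
  assert (Hx2 : Rabs (x t - x (IZR N * h)) < eps / 2).
  { eapply Rlt_le_trans; [apply Hdel|apply Rmin_l]; try split; try nra.
    - assert (0 <= IZR N) by (apply IZR_le; lia). nra.
    - apply Rabs_lt_between; nra. }
  replace (x t - zeta N) with ((x t - x (IZR N * h)) + (x (IZR N * h) - zeta N)) by ring.
  eapply Rle_lt_trans; [apply Rabs_triang|].
  assert (w * exp (M * t) = eps / 2) by (unfold w; field; lra).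
  assert (w * (1 + M * h) ^ Z.to_nat N <= w * exp (M * t)).
  { apply Rmult_le_compat_l; lra. }
  rewrite Rplus_0_l in E. lra.
Qed.


Fixpoint picard (ae re pe : R -> R) (sg : R) (m : nat) (t : R) : R :=
  match m with
  | O => pe t
  | S m' => pe t - RInt (fun s => ae s * picard ae re pe sg m' (s - re s)) sg (Rmax sg t)
  end.

Lemma cont_Rmax (c t : R) : continuity_pt (fun s => Rmax c s) t.
Proof. apply cont_eps. intros eps he. exists eps; split; auto. intros y hy.
  eapply Rle_lt_trans; [apply Rmax_lip|exact hy]. Qed.

Lemma cont_comp (f g : R -> R) (t : R) : continuity_pt g t -> continuity_pt f (g t) ->
  continuity_pt (fun s => f (g s)) t.
Proof. intros. apply (continuity_pt_comp g f t); auto. Qed.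

Lemma cont_RInt (g : R -> R) (c t : R) : (forall s, continuity_pt g s) ->
  continuity_pt (fun x => RInt g c x) t.
Proof. intros H. apply derivable_continuous_pt. exists (g t). apply deriv_RInt; auto. Qed.

Lemma picard_cont (ae re pe : R -> R) (sg : R) :
  (forall t, continuity_pt ae t) -> (forall t, continuity_pt re t) ->
  (forall t, continuity_pt pe t) ->
  forall m t, continuity_pt (picard ae re pe sg m) t.
Proof.
  intros Ha Hr Hp m. induction m as [|m IH]; intros t; simpl; auto.
  apply continuity_pt_minus; auto.
  apply (cont_comp (fun x => RInt _ sg x) (fun s => Rmax sg s)).
  apply cont_Rmax. apply cont_RInt. intros s.
  apply continuity_pt_mult; auto.
  apply (cont_comp (picard ae re pe sg m) (fun s => s - re s)); auto.
  apply continuity_pt_minus; auto. apply derivable_continuous_pt, derivable_pt_id.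
Qed.

Lemma picard_init (ae re pe : R -> R) (sg : R) :
  forall m t, t <= sg -> picard ae re pe sg m t = pe t.
Proof.
  intros [|m] t ht; simpl; auto. rewrite Rmax_left by lra. rewrite RInt_point. unfold zero; simpl; ring.
Qed.

Lemma fact_pos (n : nat) : 0 < INR (fact n).
Proof. apply lt_0_INR. apply lt_O_fact. Qed.

Lemma dpl_ext (f g : R -> R) (x l : R) : (forall y, f y = g y) ->
  derivable_pt_lim f x l -> derivable_pt_lim g x l.
Proof. intros H Hf. apply is_derive_Reals. apply is_derive_ext with f; auto.
  apply is_derive_Reals; auto. Qed.

Lemma dpl_minus (f g : R -> R) (x l1 l2 : R) : derivable_pt_lim f x l1 -> derivable_pt_lim g x l2 ->
  derivable_pt_lim (fun y => f y - g y) x (l1 - l2).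
Proof. intros. eapply dpl_ext; [|apply derivable_pt_lim_minus; eauto]. intros; reflexivity. Qed.

Lemma dpow (P M sg : R) (n : nat) (x : R) :
  derivable_pt_lim (fun x => P * (M * (x - sg)) ^ (S n) / INR (fact (S n))) x
    (M * (P * (M * (x - sg)) ^ n / INR (fact n))).
Proof.
  assert (H1 : derivable_pt_lim (fun x => M * (x - sg)) x M).
  { pose proof (derivable_pt_lim_scal (fun x => x - sg) M x (1 - 0)
      (derivable_pt_lim_minus _ _ x 1 0 (derivable_pt_lim_id x) (derivable_pt_lim_const sg x))) as H.
    replace (M * (1 - 0)) with M in H by ring.
    apply (dpl_ext (mult_real_fct M (fun x => x - sg))). intros; reflexivity. exact H. }
  assert (H2 := derivable_pt_lim_comp (fun x => M * (x - sg)) (fun y => y ^ (S n)) x M _ H1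
                  (derivable_pt_lim_pow _ (S n))).
  assert (H3 := derivable_pt_lim_scal _ (P / INR (fact (S n))) x _ H2).
  unfold mult_real_fct, comp in H3.
  replace (M * (P * (M * (x - sg)) ^ n / INR (fact n))) with
    (P / INR (fact (S n)) * (INR (S n) * (M * (x - sg)) ^ Init.Nat.pred (S n) * M)).
  2: { simpl pred. rewrite fact_simpl, mult_INR. pose proof (fact_pos n).
       assert (0 < INR (S n)) by (apply lt_0_INR; lia). field. lra. }
  eapply dpl_ext; [|exact H3]. intros y. simpl. field.
  pose proof (fact_pos (S n)). simpl in H. lra.
Qed.

Definition cb (P x : R) (m : nat) : R := P * x ^ (S m) / INR (fact (S m)).

Lemma picard_diff (ae re pe : R -> R) (sg M P : R) :
  (forall t, continuity_pt ae t) -> (forall t, continuity_pt re t) ->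
  (forall t, continuity_pt pe t) ->
  0 <= M -> 0 <= P ->
  (forall t, Rabs (ae t) <= M) -> (forall t, 0 <= re t) -> (forall t, Rabs (pe t) <= P) ->
  forall m t, Rabs (picard ae re pe sg (S m) t - picard ae re pe sg m t) <=
     cb P (M * (Rmax sg t - sg)) m.
Proof.
  intros Ha Hr Hp hM hP HaM Hre HpP.
  assert (Hc := picard_cont ae re pe sg Ha Hr Hp).
  assert (Hg : forall m s, continuity_pt (fun s => ae s * picard ae re pe sg m (s - re s)) s).
  { intros m s. apply continuity_pt_mult; auto.
    apply (cont_comp (picard ae re pe sg m) (fun s => s - re s)); auto.
    apply continuity_pt_minus; auto. apply derivable_continuous_pt, derivable_pt_id. }
  unfold cb.
  induction m as [|m IH]; intros t; set (tau := Rmax sg t);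
    assert (htau : sg <= tau) by apply Rmax_l.
  - simpl. fold tau. replace (pe t - RInt (fun s => ae s * pe (s - re s)) sg tau - pe t)
      with (- RInt (fun s => ae s * pe (s - re s)) sg tau) by ring.
    rewrite Rabs_Ropp. eapply Rle_trans. apply abs_RInt_le_const; auto.
    apply exRInt. apply (Hg 0%nat).
    intros s _. rewrite Rabs_mult. apply Rmult_le_compat; try apply Rabs_pos; eauto.
    right. field.
  - set (D := fun x => RInt (fun s => ae s * picard ae re pe sg (S m) (s - re s)) sg x
                     - RInt (fun s => ae s * picard ae re pe sg m (s - re s)) sg x).
    set (G := fun x => P * (M * (x - sg)) ^ (S (S m)) / INR (fact (S (S m)))).
    assert (HW := weighted D G
       (fun x => ae x * picard ae re pe sg (S m) (x - re x) - ae x * picard ae re pe sg m (x - re x))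
       (fun x => M * (P * (M * (x - sg)) ^ (S m) / INR (fact (S m)))) sg tau htau).
    assert (E : picard ae re pe sg (S (S m)) t - picard ae re pe sg (S m) t = - (D tau - D sg)).
    { unfold D. rewrite !RInt_point. simpl. unfold zero; simpl. fold tau. ring. }
    rewrite E, Rabs_Ropp.
    replace (P * (M * (tau - sg)) ^ S (S m) / INR (fact (S (S m)))) with (G tau - G sg).
    2: { unfold G. rewrite Rminus_diag, Rmult_0_r. simpl. field. pose proof (fact_pos (S (S m))). simpl in H; lra. }
    apply HW.
    + intros x hx. split; [|split].
      * apply dpl_minus.
        apply (deriv_RInt (fun s => ae s * picard ae re pe sg (S m) (s - re s))); apply Hg.
        apply (deriv_RInt (fun s => ae s * picard ae re pe sg m (s - re s))); apply Hg.
      * apply dpow.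
      * cbv beta. rewrite <- (Rmult_minus_distr_l (ae x)), Rabs_mult. apply Rmult_le_compat; try apply Rabs_pos; auto.
        eapply Rle_trans. apply IH.
        assert (0 <= Rmax sg (x - re x) - sg <= x - sg).
        { pose proof (Hre x). unfold Rmax; destruct (Rle_dec sg (x - re x)); lra. }
        unfold Rdiv. apply Rmult_le_compat_r. left; apply Rinv_0_lt_compat, fact_pos.
        apply Rmult_le_compat_l; auto. apply pow_incr. split; nra.
    + intros x hx. split.
      * apply (continuity_pt_minus (fun x => RInt _ sg x) (fun x => RInt _ sg x)); apply cont_RInt; apply Hg.
      * apply derivable_continuous_pt. eexists. apply dpow.
Qed.

Lemma cb_nonneg (P x : R) (m : nat) : 0 <= P -> 0 <= x -> 0 <= cb P x m.
Proof. intros. unfold cb. apply Rmult_le_pos. apply Rmult_le_pos; auto. apply pow_le; auto.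
  left; apply Rinv_0_lt_compat, fact_pos. Qed.

Lemma cb_S (P x : R) (m : nat) : cb P x (S m) = cb P x m * x / INR (S (S m)).
Proof. unfold cb. rewrite (fact_simpl (S m)), mult_INR. simpl pow.
  pose proof (fact_pos (S m)). assert (0 < INR (S (S m))) by (apply lt_0_INR; lia).
  field. lra. Qed.

Lemma cb_half (P x : R) (m : nat) : 0 <= P -> 0 <= x -> 2 * x <= INR (S (S m)) ->
  cb P x (S m) <= cb P x m / 2.
Proof. intros hP hx h. rewrite cb_S. pose proof (cb_nonneg P x m hP hx).
  assert (0 < INR (S (S m))) by (apply lt_0_INR; lia).
  unfold Rdiv. apply Rmult_le_reg_r with (INR (S (S m))); auto.
  rewrite Rmult_assoc, Rinv_l by lra. nra. Qed.

Lemma cb_mono (P x X : R) (m : nat) : 0 <= P -> 0 <= x <= X -> cb P x m <= cb P X m.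
Proof. intros hP hx. unfold cb, Rdiv. apply Rmult_le_compat_r. left; apply Rinv_0_lt_compat, fact_pos.
  apply Rmult_le_compat_l; auto. apply pow_incr; auto. Qed.

Lemma tail (u : nat -> R) (P x : R) : 0 <= P -> 0 <= x ->
  (forall m, Rabs (u (S m) - u m) <= cb P x m) ->
  forall m, 2 * x <= INR (S (S m)) ->
  forall p, Rabs (u (p + m)%nat - u m) + 2 * cb P x (p + m) <= 2 * cb P x m.
Proof.
  intros hP hx Hu m hm p. induction p as [|p IH].
  - simpl. rewrite Rminus_diag, Rabs_R0. lra.
  - replace (S p + m)%nat with (S (p + m)) by lia.
    assert (2 * x <= INR (S (S (p + m)))) by (eapply Rle_trans; [exact hm|apply le_INR; lia]).
    pose proof (cb_half P x (p + m) hP hx H).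
    pose proof (Hu (p + m)%nat).
    replace (u (S (p + m)) - u m) with ((u (S (p + m)) - u (p + m)%nat) + (u (p + m)%nat - u m)) by ring.
    pose proof (Rabs_triang (u (S (p + m)) - u (p + m)%nat) (u (p + m)%nat - u m)). lra.
Qed.

Lemma INR_lt_pow2 (n : nat) : INR n < 2 ^ n.
Proof. induction n as [|n IH]. simpl; lra. rewrite S_INR. simpl.
  assert (1 <= 2 ^ n) by (apply pow_R1_Rle; lra). lra. Qed.

Lemma cb_small (P X : R) : 0 <= P -> 0 <= X -> forall eps, 0 < eps ->
  exists m0, forall m, (m0 <= m)%nat -> 2 * X <= INR (S (S m)) /\ cb P X m <= eps.
Proof.
  intros hP hX eps he.
  destruct (INR_unbounded (2 * X)) as [m1 hm1].
  set (C := cb P X m1). assert (hC : 0 <= C) by (apply cb_nonneg; auto).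
  destruct (INR_unbounded (C / eps)) as [i hi].
  exists (i + m1)%nat. intros m hm.
  assert (H2 : forall j, (m1 <= j)%nat -> 2 * X <= INR (S (S j))).
  { intros j hj. assert (INR m1 <= INR (S (S j))) by (apply le_INR; lia). lra. }
  split. apply H2; lia.
  assert (Hd : forall p, cb P X (p + m1) <= C / 2 ^ p).
  { induction p as [|p IH]. simpl. unfold C; lra.
    replace (S p + m1)%nat with (S (p + m1)) by lia.
    eapply Rle_trans. apply cb_half; auto. apply H2; lia.
    simpl pow. unfold Rdiv in *. rewrite Rinv_mult. 
    assert (0 < / 2) by lra. nra. }
  assert (Hm : forall p, cb P X (S p + m1) <= cb P X (p + m1)).
  { intros p. replace (S p + m1)%nat with (S (p + m1)) by lia. eapply Rle_trans. apply cb_half; auto. apply H2; lia.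
    pose proof (cb_nonneg P X (p + m1) hP hX). lra. }
  assert (Hmono : forall p, cb P X (p + i + m1) <= cb P X (i + m1)).
  { induction p as [|p IH]; [simpl; lra|]. eapply Rle_trans; [|exact IH].
    replace (S p + i + m1)%nat with (S (p + i) + m1)%nat by lia.
    replace (p + i + m1)%nat with ((p + i) + m1)%nat by lia. apply Hm. }
  replace m with ((m - (i + m1)) + i + m1)%nat by lia.
  eapply Rle_trans. apply Hmono. eapply Rle_trans. apply Hd.
  assert (INR i < 2 ^ i) by apply INR_lt_pow2.
  assert (0 < 2 ^ i) by (apply pow_lt; lra).
  unfold Rdiv in *. apply Rmult_le_reg_r with (2 ^ i); auto.
  rewrite Rmult_assoc, Rinv_l by lra.
  assert (C * / eps * eps = C) by (field; lra). nra.
Qed.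

Lemma seq_lim (u : nat -> R) (P x : R) : 0 <= P -> 0 <= x ->
  (forall m, Rabs (u (S m) - u m) <= cb P x m) ->
  is_lim_seq u (real (Lim_seq u)) /\
  forall m, 2 * x <= INR (S (S m)) -> Rabs (real (Lim_seq u) - u m) <= 2 * cb P x m.
Proof.
  intros hP hx Hu.
  assert (Ht := tail u P x hP hx Hu).
  assert (Hex : ex_finite_lim_seq u).
  { apply ex_lim_seq_cauchy_corr. intros [eps he].
    destruct (cb_small P x hP hx (eps / 5)) as [m0 Hm0]; [lra|].
    exists m0. intros n m hn hm. simpl.
    destruct (Hm0 m0 (le_n _)) as [c1 c2].
    pose proof (Ht m0 c1 (n - m0)%nat). pose proof (Ht m0 c1 (m - m0)%nat).
    replace (n - m0 + m0)%nat with n in H by lia.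
    replace (m - m0 + m0)%nat with m in H0 by lia.
    pose proof (cb_nonneg P x n hP hx). pose proof (cb_nonneg P x m hP hx).
    replace (u n - u m) with ((u n - u m0) - (u m - u m0)) by ring.
    eapply Rle_lt_trans. apply Rabs_triang. rewrite Rabs_Ropp. lra. }
  destruct Hex as [l Hl].
  assert (E : real (Lim_seq u) = l) by (rewrite (is_lim_seq_unique u l Hl); reflexivity).
  rewrite E. split; auto.
  intros m hm. apply Rnot_lt_le. intros Hc.
  apply is_lim_seq_spec in Hl.
  destruct (Hl (mkposreal _ (proj2 (Rlt_0_minus _ _) Hc))) as [N HN].
  specialize (HN (N + m)%nat ltac:(lia)). simpl in HN.
  pose proof (Ht m hm N). pose proof (cb_nonneg P x (N + m) hP hx).
  replace (l - u m) with ((l - u (N + m)%nat) + (u (N + m)%nat - u m)) in Hc, HN by ring.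
  pose proof (Rabs_triang (l - u (N + m)%nat) (u (N + m)%nat - u m)).
  rewrite <- Rabs_Ropp in HN. replace (- (u (N + m)%nat - l)) with (l - u (N + m)%nat) in HN by ring.
  lra.
Qed.

Lemma eq_eps (x y : R) : (forall eps, 0 < eps -> Rabs (x - y) <= eps) -> x = y.
Proof. intros H. destruct (Req_dec x y) as [e|ne]; auto. exfalso.
  assert (0 < Rabs (x - y)) by (apply Rabs_pos_lt; lra).
  specialize (H (Rabs (x - y) / 2) ltac:(lra)). lra. Qed.

Lemma picard_exists (ae re pe : R -> R) (sg M P : R) :
  (forall t, continuity_pt ae t) -> (forall t, continuity_pt re t) ->
  (forall t, continuity_pt pe t) ->
  0 <= M -> 0 <= P ->
  (forall t, Rabs (ae t) <= M) -> (forall t, 0 <= re t) -> (forall t, Rabs (pe t) <= P) ->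
  (forall t, sg <= t -> pe t = pe sg) ->
  exists Y : R -> R, (forall t, continuity_pt Y t) /\ (forall t, t <= sg -> Y t = pe t) /\
    (forall t, sg < t -> derivable_pt_lim Y t (- (ae t * Y (t - re t)))).
Proof.
  intros Ha Hr Hp hM hP HaM Hre HpP Hpc.
  set (Y := fun m t => picard ae re pe sg m t).
  assert (HD := picard_diff ae re pe sg M P Ha Hr Hp hM hP HaM Hre HpP).
  assert (Hc := picard_cont ae re pe sg Ha Hr Hp).
  set (Yi := fun t => real (Lim_seq (fun m => Y m t))).
  assert (HL : forall t, is_lim_seq (fun m => Y m t) (Yi t) /\
     forall m, 2 * (M * (Rmax sg t - sg)) <= INR (S (S m)) ->
       Rabs (Yi t - Y m t) <= 2 * cb P (M * (Rmax sg t - sg)) m).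
  { intros t. apply seq_lim; [exact hP | pose proof (Rmax_l sg t); nra | intros m; apply HD]. }
  assert (HU : forall T, sg <= T -> forall eps, 0 < eps -> exists m0, forall m, (m0 <= m)%nat ->
      forall t, t <= T -> Rabs (Yi t - Y m t) <= eps).
  { intros T hT eps he.
    destruct (cb_small P (M * (T - sg)) hP ltac:(nra) (eps / 2)) as [m0 Hm0]; [lra|].
    exists m0. intros m hm t ht. destruct (Hm0 m hm) as [c1 c2].
    assert (hx : 0 <= M * (Rmax sg t - sg) <= M * (T - sg)).
    { assert (sg <= Rmax sg t <= T) by (split; [apply Rmax_l| apply Rmax_lub; lra]). split; nra. }
    eapply Rle_trans. apply (proj2 (HL t)). lra.
    pose proof (cb_mono P _ _ m hP hx). lra. }
  assert (HYc : forall t, continuity_pt Yi t).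
  { intros t. apply cont_eps. intros eps he.
    destruct (HU (Rmax sg (t + 1)) (Rmax_l _ _) (eps / 4)) as [m0 Hm0]; [lra|].
    destruct (cont_pt_eps _ _ (Hc m0 t) (eps / 4)) as [d [hd Hd]]; [lra|].
    exists (Rmin d 1). split. apply Rmin_pos; lra.
    intros y hy. pose proof (Rmin_l d 1). pose proof (Rmin_r d 1).
    assert (hy1 : y <= Rmax sg (t + 1)).
    { apply Rabs_lt_between in hy. pose proof (Rmax_r sg (t+1)). lra. }
    assert (ht1 : t <= Rmax sg (t + 1)) by (pose proof (Rmax_r sg (t+1)); lra).
    pose proof (Hm0 m0 (le_n _) y hy1). pose proof (Hm0 m0 (le_n _) t ht1).
    pose proof (Hd y ltac:(lra)).
    replace (Yi y - Yi t) with ((Yi y - Y m0 y) + (Y m0 y - Y m0 t) - (Yi t - Y m0 t)) by ring.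
    eapply Rle_lt_trans. apply Rabs_3. unfold Y in *. lra. }
  set (gi := fun s => ae s * Yi (s - re s)).
  assert (Hgi : forall s, continuity_pt gi s).
  { intros s. apply continuity_pt_mult; auto.
    apply (cont_comp Yi (fun s => s - re s)); auto.
    apply continuity_pt_minus; auto. apply derivable_continuous_pt, derivable_pt_id. }
  assert (Hg : forall m s, continuity_pt (fun s => ae s * Y m (s - re s)) s).
  { intros m s. apply continuity_pt_mult; auto.
    apply (cont_comp (Y m) (fun s => s - re s)); auto.
    apply continuity_pt_minus; auto. apply derivable_continuous_pt, derivable_pt_id. }
  assert (HI : forall t, Yi t = pe t - RInt gi sg (Rmax sg t)).
  { intros t. set (tau := Rmax sg t). assert (htau : sg <= tau) by apply Rmax_l.
    apply eq_eps. intros eps he.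
    set (C := 1 + M * (tau - sg)). assert (hC : 1 <= C) by (unfold C; nra).
    destruct (HU tau htau (eps / C)) as [m0 Hm0]. apply Rdiv_lt_0_compat; lra.
    pose proof (Hm0 (S m0) ltac:(lia) t (Rmax_r _ _)) as H1.
    assert (E : Y (S m0) t = pe t - RInt (fun s => ae s * Y m0 (s - re s)) sg tau) by reflexivity.
    assert (H2 : Rabs (RInt (fun s => ae s * Y m0 (s - re s)) sg tau - RInt gi sg tau) <= (tau - sg) * (M * (eps / C))).
    { assert (RInt (fun s => ae s * Y m0 (s - re s)) sg tau - RInt gi sg tau =
              RInt (fun s => ae s * Y m0 (s - re s) - gi s) sg tau) as ->.
      { symmetry. apply (RInt_minus (V:=R_CompleteNormedModule)); apply exRInt; auto. }
      apply abs_RInt_le_const; auto. apply exRInt. intros s.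
      apply continuity_pt_minus; auto.
      intros s hs. unfold gi. rewrite <- Rmult_minus_distr_l, Rabs_mult.
      apply Rmult_le_compat; try apply Rabs_pos; auto.
      rewrite <- Rabs_Ropp. replace (- (Y m0 (s - re s) - Yi (s - re s))) with (Yi (s - re s) - Y m0 (s - re s)) by ring.
      apply Hm0; auto. pose proof (Hre s). lra. }
    replace (Yi t - (pe t - RInt gi sg tau)) with ((Yi t - Y (S m0) t) + (RInt gi sg tau - RInt (fun s => ae s * Y m0 (s - re s)) sg tau)).
    2: { rewrite E. ring. }
    eapply Rle_trans. apply Rabs_triang.
    rewrite Rabs_minus_sym in H2.
    assert ((tau - sg) * (M * (eps / C)) + eps / C = eps) by (unfold C in *; field; lra).
    lra. }
  exists Yi. split; auto. split.
  - intros t ht. rewrite HI, Rmax_left by lra. rewrite RInt_point. unfold zero; simpl. ring.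
  - intros t ht. apply is_derive_Reals.
    apply is_derive_ext_loc with (fun s => pe sg - RInt gi sg s).
    + exists (mkposreal _ (proj2 (Rlt_0_minus _ _) ht)). intros y Hy.
      change (Rabs (y - t) < t - sg) in Hy. apply Rabs_lt_between in Hy.
      rewrite (HI y), (Rmax_right sg y), (Hpc y) by lra. reflexivity.
    + apply is_derive_Reals. replace (- (ae t * Yi (t - re t))) with (0 - gi t) by (unfold gi; ring).
      apply dpl_minus. apply derivable_pt_lim_const. apply deriv_RInt; auto.
Qed.

Lemma exist_sol (a r psi : R -> R) (q sg M P : R) :
  0 < q -> 0 <= sg -> cont_on (fun t => 0 <= t) a -> (forall t, 0 <= t -> Rabs (a t) <= M) ->
  0 <= M -> 0 <= P -> (forall t, 0 <= t -> 0 <= r t <= q) -> cont_on (fun t => 0 <= t) r ->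
  cont_on (fun s => sg - q <= s <= sg) psi -> (forall s, sg - q <= s <= sg -> Rabs (psi s) <= P) ->
  exists y, dde_sol a r q sg y /\ forall s, sg - q <= s <= sg -> y s = psi s.
Proof.
  intros hq hsg Ha HaM hM hP Hr Hrc Hpsi HpP.
  set (ae := fun s => a (Rmax 0 s)). set (re := fun s => r (Rmax 0 s)).
  set (pe := fun s => psi (Rmin sg (Rmax (sg - q) s))).
  assert (HI : forall s, sg - q <= Rmin sg (Rmax (sg - q) s) <= sg).
  { intros s; unfold Rmin, Rmax; destruct (Rle_dec (sg - q) s), (Rle_dec sg _); lra. }
  destruct (picard_exists ae re pe sg M P) as [Y [HYc [HYi HYd]]]; auto.
  - apply cont_ext_max; auto.
  - apply cont_ext_max; auto.
  - apply cont_ext_clamp; auto; lra.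
  - intros t; apply HaM, Rmax_l.
  - intros t; apply Hr, Rmax_l.
  - intros t; apply HpP, HI.
  - intros t ht. unfold pe. rewrite (Rmax_right (sg - q) t), (Rmax_right (sg - q) sg) by lra.
    rewrite Rmin_left, Rmin_left by lra. reflexivity.
  - exists Y. split; [split|].
    + intros t _ eps he. destruct (cont_pt_eps Y t (HYc t) eps he) as [d [hd Hd]].
      exists d; split; auto.
    + intros t ht. specialize (HYd t ht). unfold ae, re in HYd.
      rewrite Rmax_right in HYd by lra. rewrite Ropp_mult_distr_l in HYd. exact HYd.
    + intros s hs. rewrite HYi by lra. unfold pe. rewrite Rmax_right, Rmin_right by lra. reflexivity.
Qed.


Lemma disc_grow (a r : R -> R) (zeta : Z -> R) (h M B : R) (K n0 : Z) :
  0 <= M -> 0 < h -> 0 <= B ->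
  diff_sol a r h n0 zeta ->
  (forall n, (n0 <= n)%Z -> Rabs (coef a h n) <= M * h) ->
  (forall n, (n0 <= n)%Z -> (0 <= kn r h n <= K)%Z) ->
  (forall m, (n0 - K <= m <= n0)%Z -> Rabs (zeta m) <= B) ->
  forall j : nat, forall m, (n0 - K <= m <= n0 + Z.of_nat j)%Z ->
    Rabs (zeta m) <= B * (1 + M * h) ^ j.
Proof.
  intros hM hh hB Hz Hc Hk Hw j. induction j as [|j IH]; intros m hm.
  - simpl. rewrite Rmult_1_r. apply Hw. lia.
  - assert (hp : 1 <= (1 + M * h) ^ j) by (apply pow_R1_Rle; nra).
    assert (0 <= B * (M * h) * (1 + M * h) ^ j) by (apply Rmult_le_pos; [apply Rmult_le_pos|]; nra).
    rewrite Nat2Z.inj_succ in hm.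
    destruct (Z.eq_dec m (n0 + Z.succ (Z.of_nat j))) as [em|nem].
    2: { eapply Rle_trans. apply IH. lia. simpl. nra. }
    remember (n0 + Z.of_nat j)%Z as n eqn:En.
    replace m with (n + 1)%Z by lia.
    rewrite Hz by lia.
    pose proof (Hk n ltac:(lia)).
    pose proof (IH n ltac:(lia)). pose proof (IH (n - kn r h n)%Z ltac:(lia)).
    pose proof (Hc n ltac:(lia)).
    unfold Rminus. eapply Rle_trans. apply Rabs_triang. rewrite Rabs_Ropp, Rabs_mult.
    assert (Rabs (coef a h n) * Rabs (zeta (n - kn r h n)%Z) <= M * h * (B * (1 + M * h) ^ j)).
    { apply Rmult_le_compat; try apply Rabs_pos; auto. }
    simpl. nra.
Qed.

Definition ip (h s : R) : Z := Int_part (s / h).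

Definition interp (zeta : Z -> R) (h s : R) : R :=
  zeta (ip h s) + (s / h - IZR (ip h s)) * (zeta (ip h s + 1)%Z - zeta (ip h s)).

Lemma cell (h s : R) : 0 < h -> IZR (ip h s) * h <= s < IZR (ip h s) * h + h.
Proof.
  intros hh. unfold ip. destruct (base_Int_part (s / h)) as [b1 b2].
  assert (s / h * h = s) by (field; lra).
  split; nra.
Qed.

Lemma cell_range (h s : R) (lo hi : Z) : 0 < h -> IZR lo * h <= s -> s <= IZR hi * h ->
  (lo <= ip h s <= hi)%Z.
Proof.
  intros hh h1 h2. destruct (cell h s hh) as [c1 c2]. split.
  - assert (IZR lo < IZR (ip h s + 1)) by (rewrite plus_IZR; nra).
    apply lt_IZR in H. lia.
  - apply le_IZR. nra.
Qed.

Lemma ip_grid (h : R) (m : Z) : 0 < h -> ip h (IZR m * h) = m.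
Proof. intros hh. unfold ip. symmetry. apply Int_part_spec.
  replace (IZR m * h / h) with (IZR m) by (field; lra). lra. Qed.

Lemma interp_grid (zeta : Z -> R) (h : R) (m : Z) : 0 < h -> interp zeta h (IZR m * h) = zeta m.
Proof. intros hh. unfold interp. rewrite ip_grid by auto.
  replace (IZR m * h / h) with (IZR m) by (field; lra). ring. Qed.

Lemma theta_range (h s : R) : 0 < h -> 0 <= s / h - IZR (ip h s) < 1.
Proof. intros hh. unfold ip. destruct (base_Int_part (s / h)). lra. Qed.

Lemma interp_near (zeta : Z -> R) (h s : R) : 0 < h ->
  Rabs (interp zeta h s - zeta (ip h s)) <= Rabs (zeta (ip h s + 1)%Z - zeta (ip h s)).
Proof. intros hh. unfold interp. destruct (theta_range h s hh).
  replace (_ + _ - _) with ((s / h - IZR (ip h s)) * (zeta (ip h s + 1)%Z - zeta (ip h s))) by ring.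
  rewrite Rabs_mult. rewrite (Rabs_right (s / h - _)) by lra.
  pose proof (Rabs_pos (zeta (ip h s + 1)%Z - zeta (ip h s))). nra. Qed.

Lemma interp_bound (zeta : Z -> R) (h s B : R) : 0 < h ->
  Rabs (zeta (ip h s)) <= B -> Rabs (zeta (ip h s + 1)%Z) <= B -> Rabs (interp zeta h s) <= B.
Proof. intros hh h1 h2. unfold interp. destruct (theta_range h s hh) as [t1 t2].
  set (th := s / h - IZR (ip h s)) in *.
  replace (_ + _) with ((1 - th) * zeta (ip h s) + th * zeta (ip h s + 1)%Z) by ring.
  eapply Rle_trans. apply Rabs_triang. rewrite !Rabs_mult.
  rewrite (Rabs_right th), (Rabs_right (1 - th)) by lra.
  pose proof (Rabs_pos (zeta (ip h s))). nra. Qed.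

Lemma interp_lip (zeta : Z -> R) (h D s t : R) : 0 < h -> s <= t -> t - s < h ->
  Rabs (zeta (ip h s + 1)%Z - zeta (ip h s)) <= D ->
  Rabs (zeta (ip h t + 1)%Z - zeta (ip h t)) <= D ->
  Rabs (interp zeta h t - interp zeta h s) <= D * ((t - s) / h).
Proof.
  intros hh hst hst2 H1 H2.
  destruct (cell h s hh) as [c1 c2]. destruct (cell h t hh) as [d1 d2].
  assert (e1 : (ip h s < ip h t + 1)%Z) by (apply lt_IZR; rewrite plus_IZR; nra).
  assert (e2 : (ip h t < ip h s + 2)%Z) by (apply lt_IZR; rewrite plus_IZR; nra).
  assert (hD : 0 <= D) by (eapply Rle_trans; [apply Rabs_pos|exact H1]).
  assert (hts : 0 <= (t - s) / h) by (apply Rmult_le_pos; [lra|left; apply Rinv_0_lt_compat; lra]).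
  unfold interp.
  destruct (Z.eq_dec (ip h t) (ip h s)) as [E|E].
  - rewrite E. replace (_ - _) with ((t - s) / h * (zeta (ip h s + 1)%Z - zeta (ip h s))) by (field; lra).
    rewrite Rabs_mult, Rabs_right by lra. nra.
  - assert (E2 : ip h t = (ip h s + 1)%Z) by lia.
    rewrite E2 in *. rewrite plus_IZR in *.
    set (j := ip h s) in *.
    replace (_ - _) with ((1 - (s / h - IZR j)) * (zeta (j + 1)%Z - zeta j)
       + (t / h - (IZR j + 1)) * (zeta (j + 1 + 1)%Z - zeta (j + 1)%Z)) by ring.
    destruct (theta_range h s hh) as [t1 t2]. fold j in t1, t2.
    destruct (theta_range h t hh) as [u1 u2]. rewrite E2, plus_IZR in u1, u2. fold j in u1, u2.
    eapply Rle_trans. apply Rabs_triang. rewrite !Rabs_mult.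
    rewrite (Rabs_right (1 - _)), (Rabs_right (t / h - _)) by lra.
    assert ((t - s) / h = (1 - (s / h - IZR j)) + (t / h - (IZR j + 1))) by (field; lra).
    rewrite H. nra.
Qed.

Lemma telesc (zeta : Z -> R) (D : R) (lo hi : Z) :
  (forall l, (lo <= l <= hi)%Z -> Rabs (zeta (l + 1)%Z - zeta l) <= D) ->
  forall d : nat, forall i, (lo <= i)%Z -> (i + Z.of_nat d <= hi + 1)%Z ->
    Rabs (zeta (i + Z.of_nat d)%Z - zeta i) <= D * INR d.
Proof.
  intros H d. induction d as [|d IH]; intros i h1 h2.
  - simpl. rewrite Z.add_0_r, Rminus_diag, Rabs_R0. lra.
  - rewrite Nat2Z.inj_succ, S_INR.
    replace (i + Z.succ (Z.of_nat d))%Z with ((i + Z.of_nat d) + 1)%Z by lia.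
    replace (zeta (i + Z.of_nat d + 1)%Z - zeta i) with
      ((zeta (i + Z.of_nat d + 1)%Z - zeta (i + Z.of_nat d)%Z) + (zeta (i + Z.of_nat d)%Z - zeta i)) by ring.
    eapply Rle_trans. apply Rabs_triang.
    pose proof (H (i + Z.of_nat d)%Z ltac:(lia)). pose proof (IH i h1 ltac:(lia)). lra.
Qed.

Lemma telesc2 (zeta : Z -> R) (D : R) (lo hi : Z) :
  (forall l, (lo <= l <= hi)%Z -> Rabs (zeta (l + 1)%Z - zeta l) <= D) ->
  forall i j, (lo <= i <= hi + 1)%Z -> (lo <= j <= hi + 1)%Z ->
    Rabs (zeta j - zeta i) <= D * Rabs (IZR j - IZR i).
Proof.
  intros H i j hi0 hj. destruct (Z.le_ge_cases i j) as [c|c].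
  - pose proof (telesc zeta D lo hi H (Z.to_nat (j - i)) i ltac:(lia) ltac:(lia)).
    rewrite Z2Nat.id in H0 by lia. replace (i + (j - i))%Z with j in H0 by lia.
    rewrite INR_IZR_INZ, Z2Nat.id, minus_IZR in H0 by lia.
    rewrite (Rabs_right (IZR j - IZR i)); auto. apply Rle_ge. cut (IZR i <= IZR j); [lra| apply IZR_le; lia].
  - pose proof (telesc zeta D lo hi H (Z.to_nat (i - j)) j ltac:(lia) ltac:(lia)).
    rewrite Z2Nat.id in H0 by lia. replace (j + (i - j))%Z with i in H0 by lia.
    rewrite INR_IZR_INZ, Z2Nat.id, minus_IZR in H0 by lia.
    rewrite Rabs_minus_sym, (Rabs_minus_sym (IZR j)). rewrite (Rabs_right (IZR i - IZR j)); auto.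
    apply Rle_ge. cut (IZR j <= IZR i); [lra| apply IZR_le; lia].
Qed.

Lemma interp_mod (zeta : Z -> R) (h D s t : R) (lo hi : Z) : 0 < h ->
  (forall l, (lo <= l <= hi)%Z -> Rabs (zeta (l + 1)%Z - zeta l) <= D) ->
  (lo <= ip h s <= hi)%Z -> (lo <= ip h t <= hi)%Z ->
  Rabs (interp zeta h s - interp zeta h t) <= D * (Rabs (s - t) / h + 3).
Proof.
  intros hh H hs ht.
  pose proof (interp_near zeta h s hh). pose proof (interp_near zeta h t hh).
  pose proof (H _ hs). pose proof (H _ ht).
  pose proof (telesc2 zeta D lo hi H (ip h t) (ip h s) ltac:(lia) ltac:(lia)).
  destruct (theta_range h s hh) as [th1 th2]. destruct (theta_range h t hh) as [th3 th4].
  assert (HE : Rabs (s - t) / h = Rabs (s / h - t / h)).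
  { unfold Rdiv. rewrite <- Rmult_minus_distr_r, Rabs_mult, (Rabs_right (/ h)); auto.
    left; apply Rinv_0_lt_compat; lra. }
  assert (Rabs (IZR (ip h s) - IZR (ip h t)) <= Rabs (s / h - t / h) + 1).
  { apply Rabs_le. pose proof (Rle_abs (-(s / h - t / h))) as Q1. rewrite Rabs_Ropp in Q1.
    pose proof (Rle_abs (s / h - t / h)). lra. }
  assert (hD : 0 <= D) by (eapply Rle_trans; [apply Rabs_pos|exact H2]).
  replace (interp zeta h s - interp zeta h t) with
    ((interp zeta h s - zeta (ip h s)) + (zeta (ip h s) - zeta (ip h t)) - (interp zeta h t - zeta (ip h t))) by ring.
  eapply Rle_trans. apply Rabs_3. rewrite HE. nra.
Qed.

Lemma interp_cont (zeta : Z -> R) (h D : R) (lo hi : Z) : 0 < h ->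
  (forall l, (lo <= l <= hi)%Z -> Rabs (zeta (l + 1)%Z - zeta l) <= D) ->
  cont_on (fun s => IZR lo * h <= s <= IZR hi * h) (interp zeta h).
Proof.
  intros hh H t ht eps he.
  assert (hD : 0 <= D) by (eapply Rle_trans; [apply Rabs_pos|apply (H lo)];
    assert (IZR lo <= IZR hi) by nra; apply le_IZR in H0; lia).
  exists (Rmin h (eps * h / (D + 1))). split.
  { apply Rmin_pos; auto. apply Rdiv_lt_0_compat; [nra|lra]. }
  intros s hs hst. pose proof (Rmin_l h (eps * h / (D + 1))). pose proof (Rmin_r h (eps * h / (D + 1))).
  pose proof (cell_range h s lo hi hh (proj1 hs) (proj2 hs)).
  pose proof (cell_range h t lo hi hh (proj1 ht) (proj2 ht)).
  assert (key : forall u v, u <= v -> v - u < Rmin h (eps * h / (D + 1)) ->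
     (lo <= ip h u <= hi)%Z -> (lo <= ip h v <= hi)%Z ->
     Rabs (interp zeta h v - interp zeta h u) < eps).
  { intros u v huv h1 h2 h3. eapply Rle_lt_trans. apply interp_lip; auto. lra.
    assert ((v - u) / h < eps / (D + 1)).
    { unfold Rdiv. apply Rmult_lt_reg_r with h; auto. rewrite Rmult_assoc, Rinv_l, Rmult_1_r by lra.
      unfold Rdiv in H1. lra. }
    assert (D * ((v - u) / h) <= D * (eps / (D + 1))).
    { apply Rmult_le_compat_l; auto. lra. }
    assert (D * (eps / (D + 1)) < eps).
    { unfold Rdiv. apply Rmult_lt_reg_r with (D + 1). lra.
      rewrite Rmult_assoc, Rmult_assoc, Rinv_l, Rmult_1_r by lra. nra. }
    lra. }
  apply Rabs_lt_between in hst.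
  destruct (Rle_dec t s).
  - apply key; auto. lra.
  - rewrite Rabs_minus_sym. apply key; auto; lra.
Qed.

Lemma y_mod (a r y : R -> R) (q sg M D h Yb : R) : 0 < h -> 0 < q -> 0 <= sg -> 0 <= M -> 0 <= D ->
  0 <= Yb ->
  dde_sol a r q sg y -> (forall t, 0 <= t -> Rabs (a t) <= M) ->
  (forall t, 0 <= t -> 0 <= r t <= q) ->
  (forall t, sg - q <= t -> Rabs (y t) <= Yb) ->
  (forall u v, sg - q <= u <= sg -> sg - q <= v <= sg -> Rabs (y u - y v) <= D * (Rabs (u - v) / h + 3)) ->
  forall u v, sg - q <= u -> sg - q <= v ->
    Rabs (y u - y v) <= D * (Rabs (u - v) / h + 3) + M * Yb * Rabs (u - v).
Proof.
  intros hh hq hsg hM hD hY [Hc Hd] HM Hr HYb Hini.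
  assert (Hlat : forall u v, sg <= u <= v -> Rabs (y v - y u) <= M * Yb * (v - u)).
  { intros u v huv. replace (M * Yb * (v - u)) with (M * Yb * v - M * Yb * u) by ring.
    apply (weighted y (fun t => M * Yb * t) (fun t => - a t * y (t - r t)) (fun _ => M * Yb)); [lra| |].
    - intros c hc. split; [|split].
      + apply Hd; lra.
      + pose proof (derivable_pt_lim_scal (fun x => x) (M*Yb) c 1 (derivable_pt_lim_id c)) as HH.
        unfold mult_real_fct in HH. rewrite Rmult_1_r in HH. exact HH.
      + rewrite Rabs_mult, Rabs_Ropp. apply Rmult_le_compat; try apply Rabs_pos.
        apply HM; lra. apply HYb. pose proof (Hr c ltac:(lra)). lra.
    - intros c hc. split.
      + apply (cont_interior (sg - q)); auto. lra.
      + apply continuity_pt_mult. apply continuity_pt_const; intros ? ?; reflexivity.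
        apply derivable_continuous_pt, derivable_pt_id. }
  assert (Hpos : forall x, 0 <= Rabs x / h) by (intros x; apply Rmult_le_pos; [apply Rabs_pos|left; apply Rinv_0_lt_compat; lra]).
  assert (Hmono : forall x z, Rabs x <= Rabs z -> Rabs x / h <= Rabs z / h).
  { intros x z hxz. unfold Rdiv. apply Rmult_le_compat_r; auto. left; apply Rinv_0_lt_compat; lra. }
  assert (main : forall u v, sg - q <= u <= v ->
     Rabs (y u - y v) <= D * (Rabs (u - v) / h + 3) + M * Yb * Rabs (u - v)).
  { intros u v huv. assert (0 <= M * Yb) by nra.
    assert (Rabs (u - v) = v - u) by (rewrite Rabs_minus_sym; apply Rabs_right; lra).
    destruct (Rle_dec v sg).
    - pose proof (Hini u v ltac:(lra) ltac:(lra)). rewrite H0 in *. nra.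
    - destruct (Rle_dec sg u).
      + pose proof (Hlat u v ltac:(lra)). rewrite Rabs_minus_sym in H1. rewrite H0 in *.
        pose proof (Hpos (u - v)). nra.
      + pose proof (Hini u sg ltac:(lra) ltac:(lra)). pose proof (Hlat sg v ltac:(lra)).
        assert (Rabs (u - sg) = sg - u) by (rewrite Rabs_minus_sym; apply Rabs_right; lra).
        assert (Rabs (u - sg) / h <= Rabs (u - v) / h) by (apply Hmono; lra).
        replace (y u - y v) with ((y u - y sg) + (y sg - y v)) by ring.
        eapply Rle_trans. apply Rabs_triang. rewrite (Rabs_minus_sym (y sg)). rewrite H0 in *.
        rewrite H3 in H1. nra. }
  intros u v hu hv. destruct (Rle_dec u v). apply main; lra.
  rewrite Rabs_minus_sym, (Rabs_minus_sym u v). apply main; lra.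
Qed.


Lemma dde_scale (a r y : R -> R) (q sg c : R) : dde_sol a r q sg y -> dde_sol a r q sg (fun t => c * y t).
Proof.
  intros [Hc Hd]. split.
  - intros t ht eps he. destruct (Hc t ht (eps / (Rabs c + 1))) as [d [hd Hd']].
    { apply Rdiv_lt_0_compat; auto. pose proof (Rabs_pos c); lra. }
    exists d; split; auto. intros s hs hst.
    rewrite <- Rmult_minus_distr_l, Rabs_mult.
    specialize (Hd' s hs hst). pose proof (Rabs_pos c).
    assert (Rabs c * (eps / (Rabs c + 1)) < eps).
    { unfold Rdiv. apply Rmult_lt_reg_r with (Rabs c + 1). lra.
      rewrite Rmult_assoc, Rmult_assoc, Rinv_l, Rmult_1_r by lra. nra. }
    pose proof (Rabs_pos (y s - y t)). nra.
  - intros t ht. pose proof (derivable_pt_lim_scal y c t _ (Hd t ht)) as H.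
    unfold mult_real_fct in H. replace (- a t * (c * y (t - r t))) with (c * (- a t * y (t - r t))) by ring.
    exact H.
Qed.

Lemma A1_bound (a r : R -> R) (q : R) : dde_UAS a r q ->
  exists del1, 0 < del1 /\ forall sg y P, 0 <= sg -> dde_sol a r q sg y -> 0 < P ->
    (forall s, sg - q <= s <= sg -> Rabs (y s) <= P) -> forall t, sg <= t -> Rabs (y t) <= 2 * P / del1.
Proof.
  intros [A _]. destruct (A 1 ltac:(lra)) as [del [hdel Hd]].
  exists del; split; auto. intros sg y P hsg Hy hP Hw t ht.
  set (c := del / (2 * P)). assert (hc : 0 < c) by (apply Rdiv_lt_0_compat; lra).
  assert (H := Hd sg (fun t => c * y t) hsg (dde_scale a r y q sg c Hy)).
  assert (Hw' : forall s, sg - q <= s <= sg -> Rabs (c * y s) < del).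
  { intros s hs. rewrite Rabs_mult, Rabs_right by lra. specialize (Hw s hs).
    assert (c * P = del / 2) by (unfold c; field; lra). nra. }
  specialize (H Hw' t ht). simpl in H. rewrite Rabs_mult, Rabs_right in H by lra.
  replace (2 * P / del) with (1 / c) by (unfold c; field; lra).
  assert (c * (1 / c) = 1) by (field; lra). nra.
Qed.

Lemma A1_attr (a r : R -> R) (q : R) : dde_UAS a r q ->
  exists del0, 0 < del0 /\ forall eta, 0 < eta -> exists T, 0 <= T /\
    forall sg y P, 0 <= sg -> dde_sol a r q sg y -> 0 < P ->
    (forall s, sg - q <= s <= sg -> Rabs (y s) <= P) -> forall t, sg + T <= t -> Rabs (y t) <= eta * (2 * P / del0).
Proof.
  intros [_ [del [hdel Hd]]].
  exists del; split; auto. intros eta he. destruct (Hd eta he) as [T [hT HT]].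
  exists T; split; auto. intros sg y P hsg Hy hP Hw t ht.
  set (c := del / (2 * P)). assert (hc : 0 < c) by (apply Rdiv_lt_0_compat; lra).
  assert (H := HT sg (fun t => c * y t) hsg (dde_scale a r y q sg c Hy)).
  assert (Hw' : forall s, sg - q <= s <= sg -> Rabs (c * y s) < del).
  { intros s hs. rewrite Rabs_mult, Rabs_right by lra. specialize (Hw s hs).
    assert (c * P = del / 2) by (unfold c; field; lra). nra. }
  specialize (H Hw' t ht). simpl in H. rewrite Rabs_mult, Rabs_right in H by lra.
  replace (eta * (2 * P / del)) with (eta / c) by (unfold c; field; lra).
  assert (c * (eta / c) = eta) by (field; lra). nra.
Qed.


Lemma exp_mono (x y : R) : x <= y -> exp x <= exp y.
Proof. intros h. destruct (Req_dec x y) as [->|ne]; [lra|]. left; apply exp_increasing; lra. Qed.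

Lemma pow_exp2 (M h : R) (j : nat) : 0 <= M -> 0 < h -> (1 + M * h) ^ j <= exp (M * (INR j * h)).
Proof. intros. eapply Rle_trans. apply pow_exp. nra. right. f_equal. ring. Qed.

Lemma Rabs_sub_bound (x z : R) : Rabs z <= Rabs x + Rabs (x - z).
Proof. replace z with (x - (x - z)) at 1 by ring. unfold Rminus at 1.
  eapply Rle_trans. apply Rabs_triang. rewrite Rabs_Ropp. lra. Qed.

Lemma block (a r : R -> R) (q M : R)
  (hq : 0 < q)
  (ha_cont : cont_on (fun t => 0 <= t) a)
  (hr_range : forall t, 0 <= t -> 0 <= r t <= q)
  (hM : forall t, 0 <= t -> Rabs (a t) <= M)
  (A1 : dde_UAS a r q)
  (A3 : forall eps, 0 < eps -> exists del, 0 < del /\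
          forall s t, 0 <= s -> 0 <= t -> Rabs (s - t) < del ->
            Rabs (r s - r t) < eps) :
  exists Cb, 0 < Cb /\ exists K0 : nat, forall k, (K0 <= k)%nat -> (1 <= k)%nat ->
   exists Pk : nat, (1 <= Pk)%nat /\
   forall n0 zeta B, (0 <= n0)%Z -> diff_sol a r (q / INR k) n0 zeta -> 0 < B ->
    (forall m, (n0 - Z.of_nat k <= m <= n0)%Z -> Rabs (zeta m) <= B) ->
    (forall m, (n0 - Z.of_nat k <= m <= n0 + Z.of_nat Pk)%Z -> Rabs (zeta m) <= Cb * B) /\
    (forall m, (n0 + Z.of_nat Pk - Z.of_nat k <= m <= n0 + Z.of_nat Pk)%Z -> Rabs (zeta m) <= B / 2).
Proof.
  assert (hM0 : 0 <= M) by (pose proof (hM 0 (Rle_refl 0)); pose proof (Rabs_pos (a 0)); lra).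
  set (ae := fun s => a (Rmax 0 s)).
  assert (Hae : forall s, continuity_pt ae s) by (apply cont_ext_max; exact ha_cont).
  assert (Haea : forall s, 0 <= s -> ae s = a s) by (intros s hs; unfold ae; rewrite Rmax_right; auto).
  assert (hrc : cont_on (fun t => 0 <= t) r).
  { intros t ht eps he. destruct (A3 eps he) as [d [hd Hd]]. exists d; split; auto. }
  destruct (A1_bound a r q A1) as [del1 [hdel1 HB1]].
  destruct (A1_attr a r q A1) as [del0 [hdel0 HA]].
  set (G := exp (3 * M * q)). assert (hG : 1 <= G).
  { unfold G. rewrite <- exp_0. apply exp_mono. nra. }
  destruct (HA (del0 / (8 * G))) as [T [hT HT]]. { apply Rdiv_lt_0_compat; lra. }
  set (Lam := exp (M * (T + 3 * q))). assert (hLam : 1 <= Lam).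
  { unfold Lam. rewrite <- exp_0. apply exp_mono. nra. }
  set (C1 := M * G * (2 + 2 / del1) + 1).
  assert (hC1 : 1 <= C1).
  { unfold C1. assert (0 <= 2 / del1) by (apply Rmult_le_pos; [lra|left; apply Rinv_0_lt_compat; lra]).
    assert (0 <= M * G * (2 + 2 / del1)) by (apply Rmult_le_pos; [apply Rmult_le_pos|]; lra). lra. }
  set (er := 1 / (8 * C1 * Lam)). assert (her : 0 < er) by (unfold er; apply Rdiv_lt_0_compat; nra).
  destruct (A3 er her) as [dr [hdr Hdr]].
  set (Cb := G * (1 + 2 / del1) + G + 1).
  assert (hdiv1 : 0 <= 2 / del1) by (apply Rmult_le_pos; [lra|left; apply Rinv_0_lt_compat; lra]).
  exists Cb. split. { unfold Cb. nra. }
  destruct (small_h q (Rmin q (Rmin (er / 5) dr))) as [K0 HK0]; auto.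
  { apply Rmin_pos; auto. apply Rmin_pos; lra. }
  exists K0. intros k hk hk1.
  specialize (HK0 k hk hk1).
  destruct (hpos q k hq hk1) as [hh hqk].
  set (h := q / INR k) in *.
  assert (hhq : h < q) by (pose proof (Rmin_l q (Rmin (er / 5) dr)); lra).
  assert (hher : h < er / 5) by (pose proof (Rmin_r q (Rmin (er / 5) dr)); pose proof (Rmin_l (er / 5) dr); lra).
  assert (hhdr : h < dr) by (pose proof (Rmin_r q (Rmin (er / 5) dr)); pose proof (Rmin_r (er / 5) dr); lra).
  set (K := Z.of_nat k).
  assert (hKr : IZR K = INR k) by (unfold K; rewrite INR_IZR_INZ; reflexivity).
  assert (hTh : 0 <= T / h) by (apply Rmult_le_pos; [lra|left; apply Rinv_0_lt_compat; lra]).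
  set (Lz := up (T / h)). destruct (archimed (T / h)) as [ar1 ar2]. fold Lz in ar1, ar2.
  assert (hLz : (0 <= Lz)%Z) by (apply le_IZR; lra).
  set (L := Z.to_nat Lz).
  assert (hLr : IZR (Z.of_nat L) = IZR Lz) by (unfold L; rewrite Z2Nat.id; auto).
  assert (hLh1 : T <= IZR Lz * h).
  { assert (T / h * h = T) by (field; lra). nra. }
  assert (hLh2 : IZR Lz * h <= T + h).
  { assert (T / h * h = T) by (field; lra). nra. }
  exists (2 * k + L)%nat. split; [lia|].
  intros n0 zeta B hn0 Hz hB Hw.
  assert (hn0r : 0 <= IZR n0) by (apply IZR_le; lia).
  assert (Hc : forall n, (n0 <= n)%Z -> Rabs (coef a h n) <= M * h).
  { intros n hn. apply (coef_bound a ae); auto.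
    assert (0 <= IZR n) by (apply IZR_le; lia). nra. }
  assert (Hk : forall n, (n0 <= n)%Z -> (0 <= kn r h n <= K)%Z /\ IZR (kn r h n) * h <= r (IZR n * h) < IZR (kn r h n) * h + h).
  { intros n hn. apply (kn_props r q h k n hh hqk). apply hr_range.
    assert (0 <= IZR n) by (apply IZR_le; lia). nra. }
  assert (HGB : 0 <= G * B) by nra.
  assert (H1 : forall m, (n0 - K <= m <= n0 + 2 * K + 1)%Z -> Rabs (zeta m) <= G * B).
  { intros m hm.
    assert (HH := disc_grow a r zeta h M B K n0 hM0 hh (Rlt_le _ _ hB) Hz Hc
                   (fun n hn => proj1 (Hk n hn)) Hw (2 * k + 1)%nat m).
    eapply Rle_trans. apply HH. rewrite Nat2Z.inj_add, Nat2Z.inj_mul. fold K. simpl (Z.of_nat 2). lia.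
    rewrite (Rmult_comm G B). apply Rmult_le_compat_l; [lra|]. eapply Rle_trans. apply pow_exp2; auto.
    unfold G. apply exp_mono. rewrite plus_INR, mult_INR.
    replace (INR 2) with 2 by (simpl; ring). replace (INR 1) with 1 by (simpl; ring).
    assert (E : (2 * INR k + 1) * h = 2 * q + h) by lra. rewrite E.
    assert (0 <= M * (q - h)) by (apply Rmult_le_pos; lra). nra. }
  set (D := M * h * (G * B)).
  assert (hD : 0 <= D) by (unfold D; apply Rmult_le_pos; nra).
  assert (HD : forall l, (n0 <= l <= n0 + 2 * K)%Z -> Rabs (zeta (l + 1)%Z - zeta l) <= D).
  { intros l hl. rewrite Hz by lia. destruct (Hk l ltac:(lia)) as [[k1 k2] _].
    replace (zeta l - coef a h l * zeta (l - kn r h l)%Z - zeta l) with (- (coef a h l * zeta (l - kn r h l)%Z)) by ring.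
    rewrite Rabs_Ropp, Rabs_mult. unfold D. apply Rmult_le_compat; try apply Rabs_pos.
    apply Hc; lia. apply H1; lia. }
  set (n1 := (n0 + K)%Z). set (sg := IZR n1 * h).
  assert (hsgq : sg - q = IZR n0 * h) by (unfold sg, n1; rewrite plus_IZR, hKr; lra).
  assert (hsg0 : 0 <= sg) by (unfold sg, n1; rewrite plus_IZR, hKr; pose proof (pos_INR k); nra).
  set (psi := interp zeta h).
  assert (Hpc : cont_on (fun s => sg - q <= s <= sg) psi).
  { rewrite hsgq. apply (interp_cont zeta h D n0 n1 hh). intros l hl. apply HD. unfold n1 in hl; lia. }
  assert (Hrange : forall s, sg - q <= s <= sg -> (n0 <= ip h s <= n1)%Z).
  { intros s hs. apply cell_range; auto; unfold sg in *; lra. }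
  assert (Hpb : forall s, sg - q <= s <= sg -> Rabs (psi s) <= G * B).
  { intros s hs. pose proof (Hrange s hs). apply interp_bound; auto; apply H1; unfold n1 in *; lia. }
  destruct (exist_sol a r psi q sg M (G * B) hq hsg0 ha_cont hM hM0 HGB hr_range hrc Hpc Hpb)
    as [y [Hy Hyp]].
  assert (hGBp : 0 < G * B) by nra.
  set (Yb := G * B * (1 + 2 / del1)).
  assert (Hwy : forall s, sg - q <= s <= sg -> Rabs (y s) <= G * B).
  { intros s hs. rewrite Hyp by auto. apply Hpb; auto. }
  assert (HYb : forall t, sg - q <= t -> Rabs (y t) <= Yb).
  { intros t ht. unfold Yb. destruct (Rle_dec t sg).
    - pose proof (Hwy t ltac:(lra)). assert (0 <= G * B * (2 / del1)) by (apply Rmult_le_pos; lra). nra.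
    - pose proof (HB1 sg y (G * B) hsg0 Hy hGBp Hwy t ltac:(lra)).
      replace (2 * (G * B) / del1) with (G * B * (2 / del1)) in H by (field; lra). nra. }
  assert (Hini : forall u v, sg - q <= u <= sg -> sg - q <= v <= sg ->
      Rabs (y u - y v) <= D * (Rabs (u - v) / h + 3)).
  { intros u v hu hv. rewrite !Hyp by auto. apply (interp_mod zeta h D u v n0 n1 hh).
    intros l hl; apply HD; unfold n1 in *; lia. apply Hrange; auto. apply Hrange; auto. }
  assert (hYb : 0 <= Yb) by (unfold Yb; nra).
  assert (Hmod := y_mod a r y q sg M D h Yb hh hq hsg0 hM0 hD hYb Hy hM hr_range HYb Hini).
  set (rho := 2 * h + er).
  set (w := D * (rho / h + 3) + M * Yb * rho).
  assert (hw0 : 0 <= w).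
  { unfold w. assert (0 <= rho / h) by (apply Rmult_le_pos; [unfold rho; lra|left; apply Rinv_0_lt_compat; lra]).
    assert (0 <= M * Yb) by (apply Rmult_le_pos; lra).
    assert (0 <= rho) by (unfold rho; lra).
    assert (0 <= D * (rho / h + 3)) by (apply Rmult_le_pos; lra).
    assert (0 <= M * Yb * rho) by (apply Rmult_le_pos; lra). lra. }
  assert (hwB : w * Lam <= B / 4).
  { assert (E1 : D * (rho / h + 3) = M * G * B * (rho + 3 * h)) by (unfold D; field; lra).
    assert (E2 : w = B * (M * G * (rho + 3 * h) + M * G * (1 + 2 / del1) * rho)) by (unfold w, Yb; rewrite E1; ring).
    assert (E3 : M * G * (rho + 3 * h) + M * G * (1 + 2 / del1) * rho <= (C1 - 1) * (rho + 3 * h)).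
    { unfold C1. assert (0 <= M * G) by nra. assert (0 <= M * G * (2 / del1)) by (apply Rmult_le_pos; lra).
      unfold rho. nra. }
    assert (E4 : rho + 3 * h <= 2 * er) by (unfold rho; lra).
    assert (E5 : C1 * (2 * er) * Lam = 1 / 4) by (unfold er; field; lra).
    assert (0 <= rho + 3 * h) by (unfold rho; lra).
    assert (w <= B * (C1 * (2 * er))) by (rewrite E2; apply Rmult_le_compat_l; nra).
    assert (B * (C1 * (2 * er)) * Lam = B / 4).
    { replace (B * (C1 * (2 * er)) * Lam) with (B * (C1 * (2 * er) * Lam)) by ring. rewrite E5. field. }
    nra. }
  assert (hn1 : (0 <= n1)%Z) by (unfold n1; lia).
  assert (HCmp : forall m, (n1 - K <= m <= n1 + Z.of_nat (L + k))%Z -> Rabs (y (IZR m * h) - zeta m) <= B / 4).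
  { intros m hm.
    destruct Hy as [Hyc Hyd].
    assert (HH := compare a ae r y zeta q h M w 0 k n1 hh hqk hn1 hM0 hw0 (Rle_refl 0) Hae Haea hM hr_range).
    eapply Rle_trans. refine (HH _ _ _ _ (L + k)%nat _ (L + k)%nat (le_n _) m hm).
    - intros t ht. apply (cont_interior (sg - q)); auto. fold sg in ht. lra.
    - intros t ht. apply Hyd. fold sg in ht. lra.
    - intros n hn. apply Hz. lia.
    - intros m' hm'. assert (IZR n0 <= IZR m' <= IZR n1) by (split; apply IZR_le; unfold n1 in *; lia).
      rewrite Hyp. unfold psi. rewrite interp_grid by auto. rewrite Rminus_diag, Rabs_R0. lra.
      rewrite hsgq. unfold sg. split; nra.
    - intros n hn s hs.
      assert (hnr : IZR n1 <= IZR n) by (apply IZR_le; lia).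
      assert (hnh : sg <= IZR n * h) by (unfold sg; nra).
      destruct (Hk n ltac:(unfold n1 in *; lia)) as [[k1 k2] [k3 k4]].
      assert (hkr : IZR (kn r h n) * h <= q) by (rewrite hqk, <- hKr; apply Rmult_le_compat_r; [lra|apply IZR_le; lia]).
      assert (hk0 : 0 <= IZR (kn r h n) * h) by (apply Rmult_le_pos; [apply IZR_le; lia|lra]).
      assert (hs0 : 0 <= s) by lra.
      pose proof (hr_range s hs0).
      assert (Hrr : Rabs (r s - r (IZR n * h)) < er).
      { apply Hdr; auto. lra. apply Rabs_lt_between. lra. }
      apply Rabs_lt_between in Hrr.
      rewrite minus_IZR, Rmult_minus_distr_r.
      eapply Rle_trans. apply Hmod; lra.
      assert (hd : Rabs (IZR n * h - IZR (kn r h n) * h - (s - r s)) <= rho).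
      { unfold rho. apply Rabs_le. lra. }
      unfold w. assert (0 <= M * Yb) by (apply Rmult_le_pos; lra).
      assert (Rabs (IZR n * h - IZR (kn r h n) * h - (s - r s)) / h <= rho / h).
      { unfold Rdiv. apply Rmult_le_compat_r; [left; apply Rinv_0_lt_compat; lra|exact hd]. }
      nra.
    - assert (hp : (1 + M * h) ^ (L + k) <= Lam).
      { eapply Rle_trans. apply pow_exp2; auto. unfold Lam. apply exp_mono.
        rewrite plus_INR, INR_IZR_INZ, hLr.
        assert (IZR Lz * h + INR k * h <= T + 3 * q) by lra.
        apply Rmult_le_compat_l; auto. lra. }
      assert (w * (1 + M * h) ^ (L + k) <= w * Lam) by (apply Rmult_le_compat_l; auto).
      rewrite Rplus_0_l. lra. }
  assert (HPk : Z.of_nat (2 * k + L) = (2 * K + Lz)%Z).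
  { rewrite Nat2Z.inj_add, Nat2Z.inj_mul. unfold L. rewrite Z2Nat.id; auto. }
  rewrite HPk. split.
  - intros m hm. destruct (Z.le_gt_cases m n1) as [c|c].
    + eapply Rle_trans. apply H1. unfold n1 in c; lia.
      unfold Cb. assert (0 <= G * (2 / del1) * B) by (apply Rmult_le_pos; [apply Rmult_le_pos|]; lra). nra.
    + pose proof (HCmp m ltac:(rewrite Nat2Z.inj_add; unfold L; rewrite Z2Nat.id; unfold n1 in *; lia)).
      assert (IZR n1 <= IZR m) by (apply IZR_le; lia).
      pose proof (HYb (IZR m * h) ltac:(unfold sg in *; nra)).
      eapply Rle_trans. apply (Rabs_sub_bound (y (IZR m * h))).
      unfold Cb, Yb in *. nra.
  - intros m hm.
    pose proof (HCmp m ltac:(rewrite Nat2Z.inj_add; unfold L; rewrite Z2Nat.id; unfold n1 in *; lia)).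
    assert (IZR (n1 + Lz) <= IZR m) by (apply IZR_le; unfold n1; lia).
    rewrite plus_IZR in H0.
    pose proof (HT sg y (G * B) hsg0 Hy hGBp Hwy (IZR m * h) ltac:(unfold sg; nra)).
    replace (del0 / (8 * G) * (2 * (G * B) / del0)) with (B / 4) in H2 by (field; lra).
    eapply Rle_trans. apply (Rabs_sub_bound (y (IZR m * h))). lra.
Qed.


Lemma iter_blocks (a r : R -> R) (h Cb : R) (K : Z) (Pk : nat) :
  0 < Cb -> (1 <= Pk)%nat -> (0 <= K)%Z ->
  (forall n0 zeta B, (0 <= n0)%Z -> diff_sol a r h n0 zeta -> 0 < B ->
    (forall m, (n0 - K <= m <= n0)%Z -> Rabs (zeta m) <= B) ->
    (forall m, (n0 - K <= m <= n0 + Z.of_nat Pk)%Z -> Rabs (zeta m) <= Cb * B) /\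
    (forall m, (n0 + Z.of_nat Pk - K <= m <= n0 + Z.of_nat Pk)%Z -> Rabs (zeta m) <= B / 2)) ->
  forall j : nat, forall n0 zeta B, (0 <= n0)%Z -> diff_sol a r h n0 zeta -> 0 < B ->
    (forall m, (n0 - K <= m <= n0)%Z -> Rabs (zeta m) <= B) ->
    forall m, (n0 + Z.of_nat j * Z.of_nat Pk <= m <= n0 + (Z.of_nat j + 1) * Z.of_nat Pk)%Z ->
      Rabs (zeta m) <= Cb * B / 2 ^ j.
Proof.
  intros hCb hP hK BP j. induction j as [|j IH]; intros n0 zeta B hn0 Hz hB Hw m hm.
  - simpl. rewrite Rdiv_1_r. apply (proj1 (BP n0 zeta B hn0 Hz hB Hw)). lia.
  - destruct (BP n0 zeta B hn0 Hz hB Hw) as [_ H2].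
    assert (Hz' : diff_sol a r h (n0 + Z.of_nat Pk) zeta) by (intros n hn; apply Hz; lia).
    assert (HH := IH (n0 + Z.of_nat Pk)%Z zeta (B / 2) ltac:(lia) Hz' ltac:(lra)).
    assert (E : Cb * (B / 2) / 2 ^ j = Cb * B / 2 ^ S j).
    { simpl. field. apply pow_nonzero. lra. }
    rewrite <- E. apply HH.
    + intros m' hm'. apply H2. lia.
    + rewrite Nat2Z.inj_succ in hm. lia.
Qed.

Lemma iter_all (a r : R -> R) (h Cb : R) (K : Z) (Pk : nat) :
  0 < Cb -> (1 <= Pk)%nat -> (0 <= K)%Z ->
  (forall n0 zeta B, (0 <= n0)%Z -> diff_sol a r h n0 zeta -> 0 < B ->
    (forall m, (n0 - K <= m <= n0)%Z -> Rabs (zeta m) <= B) ->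
    (forall m, (n0 - K <= m <= n0 + Z.of_nat Pk)%Z -> Rabs (zeta m) <= Cb * B) /\
    (forall m, (n0 + Z.of_nat Pk - K <= m <= n0 + Z.of_nat Pk)%Z -> Rabs (zeta m) <= B / 2)) ->
  forall n0 zeta B, (0 <= n0)%Z -> diff_sol a r h n0 zeta -> 0 < B ->
    (forall m, (n0 - K <= m <= n0)%Z -> Rabs (zeta m) <= B) ->
    forall n, (n0 <= n)%Z -> Rabs (zeta n) <= Cb * B / 2 ^ (Z.to_nat ((n - n0) / Z.of_nat Pk)).
Proof.
  intros hCb hP hK BP n0 zeta B hn0 Hz hB Hw n hn.
  apply (iter_blocks a r h Cb K Pk hCb hP hK BP _ n0 zeta B hn0 Hz hB Hw).
  set (P := Z.of_nat Pk). assert (hP' : (0 < P)%Z) by (unfold P; lia).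
  assert (hq : (0 <= (n - n0) / P)%Z) by (apply Z.div_pos; lia).
  rewrite Z2Nat.id by auto.
  pose proof (Z.div_mod (n - n0) P ltac:(lia)). pose proof (Z.mod_pos_bound (n - n0) P hP').
  nia.
Qed.

Lemma part2 (q : R) (a r : R -> R) (M : R)
  (hq : 0 < q)
  (ha_cont : cont_on (fun t => 0 <= t) a)
  (hr_range : forall t, 0 <= t -> 0 <= r t <= q)
  (hM : forall t, 0 <= t -> Rabs (a t) <= M)
  (A1 : dde_UAS a r q)
  (A3 : forall eps, 0 < eps -> exists del, 0 < del /\
          forall s t, 0 <= s -> 0 <= t -> Rabs (s - t) < del ->
            Rabs (r s - r t) < eps) :
  exists K : nat, forall k : nat, (K <= k)%nat -> (1 <= k)%nat -> diff_UAS a r q k.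
Proof.
  destruct (block a r q M hq ha_cont hr_range hM A1 A3) as [Cb [hCb [K0 HK0]]].
  exists K0. intros k hk hk1. destruct (HK0 k hk hk1) as [Pk [hP BP]].
  assert (HI := iter_all a r (q / INR k) Cb (Z.of_nat k) Pk hCb hP ltac:(lia) BP).
  unfold diff_UAS. cbv zeta. split.
  - intros eps he. exists (eps / (2 * Cb)). split. apply Rdiv_lt_0_compat; lra.
    intros n0 zeta hn0 Hz Hw n hn.
    assert (hB : 0 < eps / (2 * Cb)) by (apply Rdiv_lt_0_compat; lra).
    pose proof (HI n0 zeta _ hn0 Hz hB (fun m hm => Rlt_le _ _ (Hw m hm)) n hn).
    set (j := Z.to_nat _) in H.
    assert (1 <= 2 ^ j) by (apply pow_R1_Rle; lra).
    assert (Cb * (eps / (2 * Cb)) = eps / 2) by (field; lra).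
    rewrite H1 in H. unfold Rdiv in H. 
    assert (eps * / 2 * / 2 ^ j <= eps * / 2).
    { rewrite <- (Rmult_1_r (eps * / 2)) at 2. apply Rmult_le_compat_l. lra.
      rewrite <- Rinv_1. apply Rinv_le_contravar; lra. }
    lra.
  - exists 1. split; [lra|]. intros eta he.
    destruct (INR_unbounded (Cb / eta)) as [J hJ].
    exists (Z.of_nat (J * Pk)). split; [lia|].
    intros n0 zeta hn0 Hz Hw n hn.
    pose proof (HI n0 zeta 1 hn0 Hz ltac:(lra) (fun m hm => Rlt_le _ _ (Hw m hm)) n ltac:(lia)).
    set (j := Z.to_nat _) in H.
    assert (hjJ : (J <= j)%nat).
    { unfold j. rewrite Nat2Z.inj_mul in hn.
      assert (Z.of_nat J <= (n - n0) / Z.of_nat Pk)%Z.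
      { apply Z.div_le_lower_bound; lia. }
      lia. }
    assert (2 ^ J <= 2 ^ j) by (apply Rle_pow; lra || lia).
    pose proof (INR_lt_pow2 J).
    assert (0 < 2 ^ J) by (apply pow_lt; lra).
    assert (Cb / 2 ^ J < eta).
    { apply Rmult_lt_reg_r with (2 ^ J); auto. unfold Rdiv. rewrite Rmult_assoc, Rinv_l, Rmult_1_r by lra.
      assert (Cb / eta * eta = Cb) by (field; lra). nra. }
    assert (Cb * 1 / 2 ^ j <= Cb / 2 ^ J).
    { rewrite Rmult_1_r. unfold Rdiv. apply Rmult_le_compat_l; [lra|]. apply Rinv_le_contravar; lra. }
    lra.
Qed.

Theorem corollary4p2 (q : R) (a r : R -> R)
  (hq : 0 < q)
  (ha_cont : cont_on (fun t => 0 <= t) a)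
  (ha_nonneg : forall t, 0 <= t -> 0 <= a t)
  (hr_range : forall t, 0 <= t -> 0 <= r t <= q)
  (hr_sup : is_lub (fun y => exists t, 0 <= t /\ y = r t) q)
  (A1 : dde_UAS a r q)
  (A2 : exists M, forall t, 0 <= t -> Rabs (a t) <= M)
  (A3 : forall eps, 0 < eps -> exists del, 0 < del /\
          forall s t, 0 <= s -> 0 <= t -> Rabs (s - t) < del ->
            Rabs (r s - r t) < eps) :
  (* (1) convergence of the discretization *)
  (forall (phi : R -> R), cont_on (fun s => -q <= s <= 0) phi ->
   forall t, 0 < t ->
   forall x, dde_sol a r q 0 x -> (forall s, -q <= s <= 0 -> x s = phi s) ->
   forall eps, 0 < eps -> exists K : nat, forall k : nat, (K <= k)%nat -> (1 <= k)%nat ->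
     forall zeta, diff_sol a r (q / INR k) 0 zeta ->
       (forall m, (- Z.of_nat k <= m <= 0)%Z -> zeta m = phi (IZR m * (q / INR k))) ->
       Rabs (x t - zeta (Int_part (t / (q / INR k)))) < eps)
  /\
  (* (2) UAS of the difference equation for all sufficiently small h = q/k *)
  (exists K : nat, forall k : nat, (K <= k)%nat -> (1 <= k)%nat -> diff_UAS a r q k).
Proof.
  destruct A2 as [M hM].
  split.
  - exact (part1 q a r M hq ha_cont hr_range hM A3).
  - exact (part2 q a r M hq ha_cont hr_range hM A1 A3).
Qed.
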